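(* Let $1\leq p<\infty$ and let $N\geq 2$ be an integer. Let $p_1,\dots,p_N$ be positive integers such that $2p_s<p_t$ for all $1\leq s<t\leq N$, let $l_1,\dots,l_N$ be arbitrary integers, and let $\lambda_1,\dots,\lambda_N$ be real numbers such that $1<|\lambda_s|<|\lambda_t|$ for all $1\leq s<t\leq N$. For $1\leq i\leq N$ define $f_i:\mathbb{Z}\to\mathbb{Z}$ by $f_i(n)=n+p_i$, and define the weight sequence $w^{(i)}=(w^{(i)}_n)_{n\in\mathbb{Z}}$ by $w^{(i)}_n=\lambda_i$ if $n>l_i$ and $w^{(i)}_n=1/\lambda_i$ if $n\leq l_i$. Let $T_i=T_{f_i,w^{(i)}}$ be the corresponding bilateral weighted pseudo-shift on $\ell^p(\mathbb{Z})$. Then each $T_i$ is invertible, $T_1,\dots,T_N$ are disjoint hypercyclic, and $T_1^{-1},\dots,T_N^{-1}$ are also disjoint hypercyclic.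
   Context: $(e_j)_{j\in\mathbb{Z}}$ is the canonical basis of $\ell^p(\mathbb{Z})$. Bilateral weighted pseudo-shift: given an invertible map $f:\mathbb{Z}\to\mathbb{Z}$ and a bounded nonzero weight sequence $w=(w_j)_{j\in\mathbb{Z}}$, $T_{f,w}\big(\sum_{j\in\mathbb{Z}}x_je_j\big)=\sum_{j\in\mathbb{Z}}w_{f(j)}x_{f(j)}e_j$. Operators $T_1,\dots,T_N$ ($N\geq 2$) on a separable Banach space $X$ are disjoint hypercyclic if there is $x\in X$ such that $\{(T_1^nx,\dots,T_N^nx):n\in\mathbb{N}\}$ is dense in $X^N$. *)

(* Defs.v *)
From Stdlib Require Import Reals ZArith Lra.
From Coquelicot Require Import Coquelicot.
Open Scope R_scope.

Definition zseq := Z -> R.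

Definition abspow (a p : R) : R :=
  if Req_EM_T a 0 then 0 else Rpower (Rabs a) p.

(* the bilateral sum over Z of a family, folded onto nat:
   term k = a_k + a_{-k-1} *)
Definition zfold (a : Z -> R) (k : nat) : R :=
  a (Z.of_nat k) + a (- Z.of_nat k - 1)%Z.

Definition in_lp (p : R) (x : zseq) : Prop :=
  ex_series (zfold (fun j => abspow (x j) p)).

Definition lp_norm (p : R) (x : zseq) : R :=
  abspow (Series (zfold (fun j => abspow (x j) p))) (/ p).

Definition zsub (x y : zseq) : zseq := fun j => x j - y j.

Definition pseudo_shift (f : Z -> Z) (w : Z -> R) (x : zseq) : zseq :=
  fun j => w (f j) * x (f j).

Definition bounded_op (p : R) (T : zseq -> zseq) : Prop :=
  (forall x, in_lp p x -> in_lp p (T x)) /\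
  (forall a b x y, in_lp p x -> in_lp p y ->
     T (fun j => a * x j + b * y j) = (fun j => a * T x j + b * T y j)) /\
  (exists C, forall x, in_lp p x -> lp_norm p (T x) <= C * lp_norm p x).

Definition inverse_op (p : R) (T S : zseq -> zseq) : Prop :=
  bounded_op p T /\ bounded_op p S /\
  (forall x, in_lp p x -> S (T x) = x) /\
  (forall x, in_lp p x -> T (S x) = x).

(* T_0, ..., T_{N-1} are disjoint hypercyclic on l^p(Z): some x in l^p
   has {(T_0^n x, ..., T_{N-1}^n x) : n in N} dense in (l^p)^N
   (product topology, i.e. the max of the coordinate norms). *)
Definition disjoint_hypercyclic (p : R) (N : nat) (T : nat -> zseq -> zseq)
  : Prop :=
  exists x, in_lp p x /\
    forall (y : nat -> zseq), (forall i, (i < N)%nat -> in_lp p (y i)) ->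
    forall eps, 0 < eps ->
    exists n : nat, forall i, (i < N)%nat ->
      lp_norm p (zsub (Nat.iter n (T i) x) (y i)) < eps.

Definition shift_map (q : Z) : Z -> Z := fun n => (n + q)%Z.
Definition step_weight (lam : R) (l : Z) : Z -> R :=
  fun n => if (l <? n)%Z then lam else / lam.

(* Main.v *)
Require Import Defs.
From Stdlib Require Import Reals ZArith Lra Lia List Cantor FunctionalExtensionality ClassicalEpsilon.
From Coquelicot Require Import Coquelicot.
Open Scope R_scope.


Fixpoint ps (a : nat -> R) (w : nat) : R :=
  match w with O => 0 | S w => ps a w + a w end.

Lemma sum_n_ps a w : sum_n a w = ps a (S w).
Proof.
  induction w; simpl.
  - rewrite sum_O. lra.
  - rewrite sum_Sn, IHw. simpl. unfold plus; simpl. lra.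
Qed.

Lemma ps_nonneg a w : (forall k, 0 <= a k) -> 0 <= ps a w.
Proof. intros H; induction w; simpl; [lra|specialize (H w); lra]. Qed.

Lemma ps_mono a w1 w2 : (forall k, 0 <= a k) -> (w1 <= w2)%nat -> ps a w1 <= ps a w2.
Proof.
  intros H Hw; induction Hw; [lra|simpl; specialize (H m); lra].
Qed.

Lemma ps_le a b w : (forall k, a k <= b k) -> ps a w <= ps b w.
Proof. intros H; induction w; simpl; [lra|specialize (H w); lra]. Qed.

Lemma ps_plus a b w : ps (fun k => a k + b k) w = ps a w + ps b w.
Proof. induction w; simpl; lra. Qed.

Lemma ps_scal c a w : ps (fun k => c * a k) w = c * ps a w.
Proof. induction w; simpl; lra. Qed.

Lemma ps_ext a b w : (forall k, a k = b k) -> ps a w = ps b w.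
Proof. intros H; induction w; simpl; [lra| rewrite H; lra]. Qed.

Lemma BND a B : (forall k, 0 <= a k) -> (forall w, ps a w <= B) ->
  ex_series a /\ Series a <= B.
Proof.
  intros Ha HB.
  assert (Hf : ex_finite_lim_seq (sum_n a)).
  { apply ex_finite_lim_seq_incr with B.
    - intros n. rewrite !sum_n_ps. apply ps_mono; auto.
    - intros n. rewrite sum_n_ps; auto. }
  destruct Hf as [l Hl].
  split.
  - exists l. exact Hl.
  - unfold Series. rewrite (is_lim_seq_unique _ _ Hl). simpl.
    assert (Rbar_le l B).
    { apply is_lim_seq_le with (sum_n a) (fun _ => B).
      - intros n; rewrite sum_n_ps; auto.
      - exact Hl.
      - apply is_lim_seq_const. }
    simpl in H. exact H.
Qed.

Lemma ps_le_Series a w : (forall k, 0 <= a k) -> ex_series a -> ps a w <= Series a.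
Proof.
  intros Ha [l Hl].
  rewrite (is_series_unique _ _ Hl).
  destruct w as [|w]; simpl.
  - assert (0 <= l).
    { assert (Rbar_le 0 l).
      { apply is_lim_seq_le with (fun _ => 0) (sum_n a).
        - intros n; rewrite sum_n_ps; apply ps_nonneg; auto.
        - apply is_lim_seq_const.
        - exact Hl. }
      exact H. }
    lra.
  - assert (Rbar_le (ps a (S w)) l).
    { apply is_lim_seq_le_loc with (fun _ => ps a (S w)) (sum_n a).
      - exists w. intros n Hn. rewrite sum_n_ps. apply ps_mono; auto; lia.
      - apply is_lim_seq_const.
      - exact Hl. }
    exact H.
Qed.

Lemma ps_tail a : (forall k, 0 <= a k) -> ex_series a -> forall eta, 0 < eta ->
  exists K, forall w, (K <= w)%nat -> ps a w - ps a K <= eta.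
Proof.
  intros Ha Hex eta Heta.
  destruct Hex as [l Hl].
  assert (Hl2 : is_lim_seq (sum_n a) l) by exact Hl. apply is_lim_seq_spec in Hl2. rename Hl2 into Hl'.
  destruct (Hl' (mkposreal eta Heta)) as [N HN].
  exists (S N). intros w Hw.
  specialize (HN N (le_n _)). simpl in HN. rewrite sum_n_ps in HN.
  assert (Hle : ps a w <= l).
  { assert (Hs : ex_series a) by (exists l; exact Hl).
    pose proof (ps_le_Series a w Ha Hs). rewrite (is_series_unique _ _ Hl) in H. exact H. }
  apply Rabs_def2 in HN. lra.
Qed.

Lemma AP0 a p : 0 <= abspow a p.
Proof. unfold abspow. destruct (Req_EM_T a 0); [lra|]. unfold Rpower. left; apply exp_pos. Qed.

Lemma AP_pos a p : a <> 0 -> abspow a p = Rpower (Rabs a) p.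
Proof. intros H; unfold abspow; destruct (Req_EM_T a 0); [contradiction|auto]. Qed.

Lemma AP_zero p : abspow 0 p = 0.
Proof. unfold abspow; destruct (Req_EM_T 0 0); [auto|lra]. Qed.

Lemma AP_abs a p : abspow (Rabs a) p = abspow a p.
Proof.
  destruct (Req_EM_T a 0) as [->|H].
  - rewrite Rabs_R0; auto.
  - rewrite !AP_pos; auto. rewrite Rabs_Rabsolu; auto.
    intro H'; apply H. apply Rabs_eq_0 in H'. auto.
Qed.

Lemma AP_mono a b p : 0 <= p -> Rabs a <= Rabs b -> abspow a p <= abspow b p.
Proof.
  intros Hp H. destruct (Req_EM_T a 0) as [->|Ha].
  - rewrite AP_zero; apply AP0.
  - assert (Hb : b <> 0). { intros ->. rewrite Rabs_R0 in H. pose proof (Rabs_pos_lt a Ha). lra. }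
    rewrite !AP_pos; auto. apply Rle_Rpower_l; auto. split; auto. apply Rabs_pos_lt; auto.
Qed.

Lemma AP_le1 a p : 1 <= p -> Rabs a <= 1 -> abspow a p <= Rabs a.
Proof.
  intros Hp H. destruct (Req_EM_T a 0) as [->|Ha].
  - rewrite AP_zero, Rabs_R0; lra.
  - rewrite AP_pos; auto. pose proof (Rabs_pos_lt a Ha).
    unfold Rpower. 
    assert (ln (Rabs a) <= 0).
    { destruct (Req_dec (Rabs a) 1) as [E|E]. rewrite E, ln_1; lra.
      left. rewrite <- ln_1. apply ln_increasing; lra. }
    rewrite <- (exp_ln (Rabs a)) at 2 by lra.
    assert (p * ln (Rabs a) <= ln (Rabs a)) by nra.
    destruct (Rle_lt_or_eq_dec _ _ H2) as [H3|H3]; [left; apply exp_increasing; auto| rewrite H3; lra].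
Qed.

Lemma AP_mul a b p : abspow (a * b) p = abspow a p * abspow b p.
Proof.
  destruct (Req_EM_T a 0) as [->|Ha]. { rewrite Rmult_0_l, AP_zero; lra. }
  destruct (Req_EM_T b 0) as [->|Hb]. { rewrite Rmult_0_r, AP_zero; lra. }
  assert (Hab : a * b <> 0) by (intro H; apply Rmult_integral in H; tauto).
  rewrite !AP_pos; auto.
  rewrite Rabs_mult. rewrite Rpower_mult_distr; auto; apply Rabs_pos_lt; auto.
Qed.

Lemma AP_sum2 a b p : 0 <= p ->
  abspow (a + b) p <= Rpower 2 p * (abspow a p + abspow b p).
Proof.
  intros Hp.
  assert (Hm : Rabs (a + b) <= Rabs (2 * Rmax (Rabs a) (Rabs b))).
  { rewrite Rabs_mult, (Rabs_right 2) by lra.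
    rewrite (Rabs_right (Rmax _ _)). 2: { apply Rle_ge; eapply Rle_trans; [apply Rabs_pos|apply Rmax_l]. }
    eapply Rle_trans; [apply Rabs_triang|].
    pose proof (Rmax_l (Rabs a) (Rabs b)); pose proof (Rmax_r (Rabs a) (Rabs b)); lra. }
  eapply Rle_trans; [apply AP_mono; eauto|].
  rewrite AP_mul.
  assert (E2 : abspow 2 p = Rpower 2 p) by (rewrite AP_pos by lra; rewrite Rabs_right by lra; auto).
  rewrite E2. apply Rmult_le_compat_l. { unfold Rpower; left; apply exp_pos. }
  unfold Rmax; destruct (Rle_dec (Rabs a) (Rabs b)); rewrite AP_abs;
  pose proof (AP0 a p); pose proof (AP0 b p); lra.
Qed.

Lemma Rpower_pos x y : 0 < Rpower x y.
Proof. unfold Rpower; apply exp_pos. Qed.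

Lemma AP_root_lt s eps p : 0 < p -> 0 <= s -> 0 < eps -> s < Rpower eps p ->
  abspow s (/ p) < eps.
Proof.
  intros Hp Hs He H.
  destruct (Req_EM_T s 0) as [->|Hs0]. { rewrite AP_zero; lra. }
  rewrite AP_pos; auto. rewrite Rabs_right by lra.
  assert (E : Rpower (Rpower eps p) (/ p) = eps).
  { rewrite Rpower_mult. rewrite Rinv_r by lra. apply Rpower_1; auto. }
  rewrite <- E. apply Rlt_Rpower_l. { apply Rinv_0_lt_compat; lra. } lra.
Qed.

Lemma AP_root_mono s t p : 0 < p -> 0 <= s <= t -> abspow s (/ p) <= abspow t (/ p).
Proof.
  intros Hp Hst. apply AP_mono. left; apply Rinv_0_lt_compat; lra.
  rewrite !Rabs_right; lra.
Qed.

Lemma AP_root_scale L s p : 0 < p -> 0 < L -> 0 <= s ->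
  abspow (Rpower L p * s) (/ p) = L * abspow s (/ p).
Proof.
  intros Hp HL Hs.
  destruct (Req_EM_T s 0) as [->|Hs0]. { rewrite Rmult_0_r, AP_zero; lra. }
  pose proof (Rpower_pos L p).
  assert (Hab : Rpower L p * s <> 0) by (intro H'; apply Rmult_integral in H'; destruct H'; lra).
  rewrite !AP_pos; auto.
  rewrite !Rabs_right by nra.
  rewrite <- Rpower_mult_distr; auto; [|lra].
  rewrite Rpower_mult, Rinv_r, Rpower_1 by lra. auto.
Qed.

Definition pf (g : Z -> R) (w : nat) : R := ps (zfold g) w.

Lemma pf_S g w : pf g (S w) = pf g w + g (Z.of_nat w) + g (- Z.of_nat w - 1)%Z.
Proof. unfold pf; simpl; unfold zfold; lra. Qed.

Lemma pf_nonneg g w : (forall j, 0 <= g j) -> 0 <= pf g w.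
Proof. intros H; unfold pf; apply ps_nonneg; intros k; unfold zfold; pose proof (H (Z.of_nat k)); pose proof (H (- Z.of_nat k - 1)%Z); lra. Qed.

Lemma pf_mono g w1 w2 : (forall j, 0 <= g j) -> (w1 <= w2)%nat -> pf g w1 <= pf g w2.
Proof. intros H Hw; unfold pf; apply ps_mono; auto; intros k; unfold zfold; pose proof (H (Z.of_nat k)); pose proof (H (- Z.of_nat k - 1)%Z); lra. Qed.

Lemma pf_le g h w : (forall j, g j <= h j) -> pf g w <= pf h w.
Proof. intros H; unfold pf; apply ps_le; intros k; unfold zfold; pose proof (H (Z.of_nat k)); pose proof (H (- Z.of_nat k - 1)%Z); lra. Qed.

Lemma pf_plus g h w : pf (fun j => g j + h j) w = pf g w + pf h w.
Proof. unfold pf. rewrite <- ps_plus. apply ps_ext. intros; unfold zfold; lra. Qed.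

Lemma pf_scal c g w : pf (fun j => c * g j) w = c * pf g w.
Proof. unfold pf. rewrite <- ps_scal. apply ps_ext. intros; unfold zfold; lra. Qed.

Lemma pf_ext g h w : (forall j, g j = h j) -> pf g w = pf h w.
Proof. intros H; unfold pf; apply ps_ext; intros; unfold zfold; rewrite !H; auto. Qed.

Lemma ps_swap (F : nat -> nat -> R) A w :
  ps (fun k => ps (fun m => F m k) A) w = ps (fun m => ps (F m) w) A.
Proof.
  induction A; simpl.
  - induction w; simpl; lra.
  - rewrite ps_plus. rewrite IHA. auto.
Qed.

Lemma pf_swap (G : nat -> Z -> R) A w :
  pf (fun j => ps (fun m => G m j) A) w = ps (fun m => pf (G m) w) A.
Proof.
  unfold pf. rewrite <- ps_swap. apply ps_ext. intros k. unfold zfold.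
  rewrite <- ps_plus. auto.
Qed.

Lemma pf_shift1 g w : pf (fun j => g (j + 1)%Z) w = pf g w - g (- Z.of_nat w)%Z + g (Z.of_nat w).
Proof.
  induction w.
  - unfold pf; simpl. replace (- 0)%Z with 0%Z by lia. lra.
  - rewrite !pf_S, IHw. rewrite Nat2Z.inj_succ.
    replace (- Z.of_nat w - 1 + 1)%Z with (- Z.of_nat w)%Z by lia.
    replace (Z.of_nat w + 1)%Z with (Z.succ (Z.of_nat w)) by lia.
    replace (- Z.succ (Z.of_nat w))%Z with (- Z.of_nat w - 1)%Z by lia. lra.
Qed.

Lemma pf_shiftm1 g w : pf (fun j => g (j - 1)%Z) w = pf g w + g (- Z.of_nat w - 1)%Z - g (Z.of_nat w - 1)%Z.
Proof.
  induction w.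
  - unfold pf; simpl. replace (- 0 - 1)%Z with (0 - 1)%Z by lia. lra.
  - rewrite !pf_S, IHw. rewrite Nat2Z.inj_succ.
    replace (Z.of_nat w - 1 - 1)%Z with (Z.of_nat w - 1 - 1)%Z by lia.
    replace (Z.succ (Z.of_nat w) - 1)%Z with (Z.of_nat w) by lia.
    replace (- Z.succ (Z.of_nat w) - 1)%Z with (- Z.of_nat w - 1 - 1)%Z by lia. lra.
Qed.

Lemma pf_shift_nat g (q : nat) w : (forall j, 0 <= g j) ->
  pf (fun j => g (j + Z.of_nat q)%Z) w <= pf g (w + q).
Proof.
  revert g w. induction q; intros g w Hg.
  - rewrite Nat.add_0_r. right. apply pf_ext. intros; f_equal; lia.
  - assert (H1 := IHq (fun i => g (i + 1)%Z) w (fun j => Hg _)). cbv beta in H1.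
    rewrite (pf_ext _ (fun j => g (j + Z.of_nat q + 1)%Z)) by (intros; f_equal; lia).
    eapply Rle_trans; [exact H1|].
    rewrite pf_shift1. replace (w + S q)%nat with (S (w + q)) by lia. rewrite pf_S.
    pose proof (Hg (- Z.of_nat (w + q))%Z). pose proof (Hg (- Z.of_nat (w+q) - 1)%Z). lra.
Qed.

Lemma pf_shift_negnat g (q : nat) w : (forall j, 0 <= g j) ->
  pf (fun j => g (j - Z.of_nat q)%Z) w <= pf g (w + q).
Proof.
  revert g w. induction q; intros g w Hg.
  - rewrite Nat.add_0_r. right. apply pf_ext. intros; f_equal; lia.
  - assert (H1 := IHq (fun i => g (i - 1)%Z) w (fun j => Hg _)). cbv beta in H1.
    rewrite (pf_ext _ (fun j => g (j - Z.of_nat q - 1)%Z)) by (intros; f_equal; lia).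
    eapply Rle_trans; [exact H1|].
    rewrite pf_shiftm1. replace (w + S q)%nat with (S (w + q)) by lia. rewrite pf_S.
    pose proof (Hg (Z.of_nat (w + q) - 1)%Z). pose proof (Hg (Z.of_nat (w+q))%Z). lra.
Qed.

Lemma pf_shift g (q : Z) w : (forall j, 0 <= g j) ->
  pf (fun j => g (j + q)%Z) w <= pf g (w + Z.to_nat (Z.abs q)).
Proof.
  intros Hg. destruct (Z_le_gt_dec 0 q).
  - rewrite (pf_ext _ (fun j => g (j + Z.of_nat (Z.to_nat (Z.abs q)))%Z)).
    + apply pf_shift_nat; auto.
    + intros; f_equal; lia.
  - rewrite (pf_ext _ (fun j => g (j - Z.of_nat (Z.to_nat (Z.abs q)))%Z)).
    + apply pf_shift_negnat; auto.
    + intros; f_equal; lia.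
Qed.

Definition ind (c : Z) (len : Z) (j : Z) : R :=
  if andb (Z.leb c j) (Z.ltb j (c + len)) then 1 else 0.

Lemma ind_nonneg c len j : 0 <= ind c len j.
Proof. unfold ind; destruct (andb _ _); lra. Qed.

Lemma pf_ind c len w : (0 <= len)%Z ->
  pf (ind c len) w = IZR (Z.max 0 (Z.min (Z.of_nat w) (c + len) - Z.max (- Z.of_nat w) c)).
Proof.
  intros Hl. induction w.
  - unfold pf; simpl. f_equal. lia.
  - rewrite pf_S, IHw. unfold ind.
    destruct (Z.leb_spec c (Z.of_nat w)); destruct (Z.ltb_spec (Z.of_nat w) (c + len));
    destruct (Z.leb_spec c (- Z.of_nat w - 1)); destruct (Z.ltb_spec (- Z.of_nat w - 1) (c + len));
    simpl; rewrite <- ?plus_IZR; f_equal; lia.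
Qed.

Lemma pf_supp g c len delta w : (0 <= len)%Z -> 0 <= delta ->
  (forall j, 0 <= g j <= delta * ind c len j) -> pf g w <= delta * IZR len.
Proof.
  intros Hl Hd H. eapply Rle_trans. apply pf_le with (h := fun j => delta * ind c len j).
  intros j; apply H. rewrite pf_scal, pf_ind by auto.
  apply Rmult_le_compat_l; auto. apply IZR_le. lia.
Qed.

Lemma in_lp_pf p x : in_lp p x <-> ex_series (zfold (fun j => abspow (x j) p)).
Proof. reflexivity. Qed.

Lemma zfold_nonneg g k : (forall j, 0 <= g j) -> 0 <= zfold g k.
Proof. intros H; unfold zfold; pose proof (H (Z.of_nat k)); pose proof (H (- Z.of_nat k - 1)%Z); lra. Qed.

Lemma pf_le_Series g w : (forall j, 0 <= g j) -> ex_series (zfold g) -> pf g w <= Series (zfold g).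
Proof. intros H Hs. unfold pf. apply ps_le_Series; auto. intros; apply zfold_nonneg; auto. Qed.

Lemma pf_BND g B : (forall j, 0 <= g j) -> (forall w, pf g w <= B) ->
  ex_series (zfold g) /\ Series (zfold g) <= B.
Proof. intros H HB. apply BND; auto. intros; apply zfold_nonneg; auto. Qed.

Lemma Series_nonneg g : (forall j, 0 <= g j) -> ex_series (zfold g) -> 0 <= Series (zfold g).
Proof.
  intros H E. eapply Rle_trans; [|apply (pf_le_Series g 0 H E)]. unfold pf; simpl; lra.
Qed.

Lemma shiftop_lp p x y (q : Z) C : 0 < p -> 0 < C ->
  (forall j, Rabs (y j) <= C * Rabs (x (j + q)%Z)) -> in_lp p x ->
  in_lp p y /\ Series (zfold (fun j => abspow (y j) p)) <= Rpower C p * Series (zfold (fun j => abspow (x j) p)).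
Proof.
  intros Hp HC H Hx.
  assert (Hx0 : forall j, 0 <= abspow (x j) p) by (intros; apply AP0).
  apply pf_BND. { intros; apply AP0. }
  intros w. eapply Rle_trans.
  { apply pf_le with (h := fun j => Rpower C p * abspow (x (j + q)%Z) p).
    intros j. replace (Rpower C p) with (abspow C p) by (rewrite AP_pos by lra; rewrite Rabs_right by lra; auto).
    rewrite <- AP_mul.
    apply AP_mono; [lra|]. rewrite Rabs_mult, (Rabs_right C) by lra. apply H. }
  rewrite pf_scal. apply Rmult_le_compat_l. { left; apply Rpower_pos. }
  eapply Rle_trans. { apply (pf_shift (fun j => abspow (x j) p)); auto. }
  apply pf_le_Series; auto.
Qed.

Definition T_op (q : Z) (lam : R) (l : Z) : zseq -> zseq :=
  pseudo_shift (shift_map q) (step_weight lam l).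

Definition refl (x : zseq) : zseq := fun j => x (- j - 1)%Z.

Definition S_op (q : Z) (lam : R) (l : Z) : zseq -> zseq :=
  fun x => refl (T_op q lam (q - 2 - l) (refl x)).

Lemma step_weight_abs lam l n : lam <> 0 -> Rabs (step_weight lam l n) <= Rabs lam + Rabs (/ lam).
Proof.
  intros H. unfold step_weight. destruct (Z.ltb l n); pose proof (Rabs_pos lam); pose proof (Rabs_pos (/lam)); lra.
Qed.

Lemma step_weight_nz lam l n : lam <> 0 -> step_weight lam l n <> 0.
Proof. intros H; unfold step_weight; destruct (Z.ltb l n); auto. apply Rinv_neq_0_compat; auto. Qed.

Lemma T_op_bounded p q lam l : 1 <= p -> lam <> 0 -> bounded_op p (T_op q lam l).
Proof.
  intros Hp Hl.
  set (C := Rabs lam + Rabs (/ lam)).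
  assert (HC : 0 < C). { unfold C. pose proof (Rabs_pos_lt lam Hl). pose proof (Rabs_pos (/lam)). lra. }
  assert (Hb : forall x j, Rabs (T_op q lam l x j) <= C * Rabs (x (j + q)%Z)).
  { intros x j. unfold T_op, pseudo_shift, shift_map. rewrite Rabs_mult.
    apply Rmult_le_compat_r; [apply Rabs_pos|]. apply step_weight_abs; auto. }
  split; [|split].
  - intros x Hx. apply (shiftop_lp p x _ q C); auto. lra.
  - intros a b x y _ _. unfold T_op, pseudo_shift. apply functional_extensionality. intros j. ring.
  - exists C. intros x Hx.
    destruct (shiftop_lp p x (T_op q lam l x) q C) as [H1 H2]; auto; try lra.
    unfold lp_norm.
    eapply Rle_trans. { apply AP_root_mono; [lra|]. split; [apply Series_nonneg; auto; intros; apply AP0|]. exact H2. }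
    rewrite AP_root_scale; try lra. apply Series_nonneg; auto; intros; apply AP0.
Qed.

Lemma refl_refl x : refl (refl x) = x.
Proof. apply functional_extensionality; intros j; unfold refl; f_equal; lia. Qed.

Lemma zfold_refl g : zfold (fun j => g (- j - 1)%Z) = zfold g.
Proof. apply functional_extensionality; intros k; unfold zfold. replace (- (- Z.of_nat k - 1) - 1)%Z with (Z.of_nat k) by lia. lra. Qed.

Lemma in_lp_refl p x : in_lp p (refl x) <-> in_lp p x.
Proof. unfold in_lp, refl. rewrite (zfold_refl (fun j => abspow (x j) p)). tauto. Qed.

Lemma lp_norm_refl p x : lp_norm p (refl x) = lp_norm p x.
Proof. unfold lp_norm, refl. rewrite (zfold_refl (fun j => abspow (x j) p)). auto. Qed.

Lemma S_op_bounded p q lam l : 1 <= p -> lam <> 0 -> bounded_op p (S_op q lam l).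
Proof.
  intros Hp Hl. destruct (T_op_bounded p q lam (q - 2 - l) Hp Hl) as [B1 [B2 [C B3]]].
  split; [|split].
  - intros x Hx. unfold S_op. apply in_lp_refl. apply B1. apply in_lp_refl; auto.
  - intros a b x y Hx Hy. unfold S_op.
    assert (E : refl (fun j => a * x j + b * y j) = fun j => a * refl x j + b * refl y j) by reflexivity.
    rewrite E, B2 by (apply in_lp_refl; auto). reflexivity.
  - exists C. intros x Hx. unfold S_op. rewrite lp_norm_refl, <- (lp_norm_refl p x).
    apply B3. apply in_lp_refl; auto.
Qed.

Lemma S_T p q lam l : lam <> 0 -> inverse_op p (T_op q lam l) (S_op q lam l) \/ True.
Proof. auto. Qed.

Lemma ST_id q lam l x : lam <> 0 -> S_op q lam l (T_op q lam l x) = x.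
Proof.
  intros H. apply functional_extensionality; intros j.
  unfold S_op, refl, T_op, pseudo_shift, shift_map, step_weight.
  replace (- (- j - 1 + q) - 1)%Z with (j - q)%Z by lia.
  replace (j - q + q)%Z with j by lia.
  replace (- j - 1 + q)%Z with (q - 1 - j)%Z by lia.
  destruct (Z.ltb_spec (q - 2 - l) (q - 1 - j)); destruct (Z.ltb_spec l j); try lia.
  - field; auto.
  - field; auto.
Qed.

Lemma TS_id q lam l x : lam <> 0 -> T_op q lam l (S_op q lam l x) = x.
Proof.
  intros H. apply functional_extensionality; intros j.
  unfold S_op, refl, T_op, pseudo_shift, shift_map, step_weight.
  replace (- (j + q) - 1 + q)%Z with (- j - 1)%Z by lia.
  replace (- (- j - 1) - 1)%Z with j by lia.
  destruct (Z.ltb_spec (q - 2 - l) (- j - 1)); destruct (Z.ltb_spec l (j + q)); try lia.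
  - field; auto.
  - field; auto.
Qed.

Lemma inverse_TS p q lam l : 1 <= p -> lam <> 0 -> inverse_op p (T_op q lam l) (S_op q lam l).
Proof.
  intros Hp H. split; [apply T_op_bounded; auto|]. split; [apply S_op_bounded; auto|].
  split; intros; [apply ST_id|apply TS_id]; auto.
Qed.

Lemma iter_S_op n q lam l x : Nat.iter n (S_op q lam l) x = refl (Nat.iter n (T_op q lam (q - 2 - l)) (refl x)).
Proof.
  induction n; simpl. { rewrite refl_refl; auto. }
  rewrite IHn. unfold S_op. rewrite refl_refl. auto.
Qed.

Fixpoint cw (q : Z) (lam : R) (l : Z) (n : nat) (j : Z) : R :=
  match n with O => 1 | S n => step_weight lam l (j + q) * cw q lam l n (j + q) end.

Fixpoint ex (q l : Z) (n : nat) (j : Z) : Z :=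
  match n with O => 0%Z | S n => ((if Z.ltb l (j + q) then 1 else -1) + ex q l n (j + q))%Z end.

Lemma iter_T n q lam l x j :
  Nat.iter n (T_op q lam l) x j = cw q lam l n j * x (j + Z.of_nat n * q)%Z.
Proof.
  revert j. induction n; intros j.
  - change (x j = 1 * x (j + Z.of_nat 0 * q)%Z). replace (j + Z.of_nat 0 * q)%Z with j by lia. lra.
  - change (T_op q lam l (Nat.iter n (T_op q lam l) x) j = step_weight lam l (j+q) * cw q lam l n (j+q) * x (j + Z.of_nat (S n) * q)%Z).
    unfold T_op at 1, pseudo_shift, shift_map. rewrite IHn.
    replace (j + q + Z.of_nat n * q)%Z with (j + Z.of_nat (S n) * q)%Z by lia. lra.
Qed.

Lemma cw_abs q lam l n j : lam <> 0 -> Rabs (cw q lam l n j) = powerRZ (Rabs lam) (ex q l n j).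
Proof.
  intros H. revert j; induction n; intros j; simpl.
  - rewrite Rabs_R1; auto.
  - rewrite Rabs_mult, IHn. rewrite powerRZ_add by (apply Rabs_no_R0; auto).
    f_equal. unfold step_weight. destruct (Z.ltb l (j + q)); simpl.
    + lra.
    + rewrite Rabs_inv. field. apply Rabs_no_R0; auto.
Qed.

Lemma cw_nz q lam l n j : lam <> 0 -> cw q lam l n j <> 0.
Proof.
  intros H. revert j; induction n; intros j; simpl. lra.
  apply Rmult_integral_contrapositive. split; auto. apply step_weight_nz; auto.
Qed.

Lemma ex_split q l a b j : ex q l (a + b) j = (ex q l a j + ex q l b (j + Z.of_nat a * q))%Z.
Proof.
  revert j; induction a; intros j.
  - change (ex q l b j = (0 + ex q l b (j + Z.of_nat 0 * q))%Z). replace (j + Z.of_nat 0 * q)%Z with j by lia. lia.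
  - rewrite Nat.add_succ_l. cbn [ex]. rewrite IHa. replace (j + q + Z.of_nat a * q)%Z with (j + Z.of_nat (S a) * q)%Z by lia. lia.
Qed.

Lemma ex_bounds q l n j : (- Z.of_nat n <= ex q l n j <= Z.of_nat n)%Z.
Proof.
  revert j; induction n; intros j. simpl; lia.
  cbn [ex]. specialize (IHn (j + q)%Z). destruct (Z.ltb l (j+q)); lia.
Qed.

Lemma ex_all_bad q l a j : (0 < q)%Z -> (j + Z.of_nat a * q <= l)%Z -> ex q l a j = (- Z.of_nat a)%Z.
Proof.
  intros Hq. revert j; induction a; intros j H. reflexivity.
  cbn [ex]. rewrite IHa by lia. destruct (Z.ltb_spec l (j + q)); lia.
Qed.

Lemma ex_all_good q l a j : (0 < q)%Z -> (l <= j)%Z -> ex q l a j = Z.of_nat a.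
Proof.
  intros Hq. revert j; induction a; intros j H. reflexivity.
  cbn [ex]. rewrite IHa by lia. destruct (Z.ltb_spec l (j + q)); lia.
Qed.

Lemma ex_upper q l n a j : (0 < q)%Z -> (a <= n)%nat -> (j + Z.of_nat a * q <= l)%Z ->
  (ex q l n j <= Z.of_nat n - 2 * Z.of_nat a)%Z.
Proof.
  intros Hq Ha H. replace n with (a + (n - a))%nat by lia.
  rewrite ex_split, ex_all_bad by auto.
  pose proof (ex_bounds q l (n - a) (j + Z.of_nat a * q)). lia.
Qed.

Lemma ex_lower q l n d j : (0 < q)%Z -> (l <= j + Z.of_nat d * q)%Z ->
  (Z.of_nat n - 2 * Z.of_nat d <= ex q l n j)%Z.
Proof.
  intros Hq H. destruct (le_lt_dec d n).
  - replace n with (d + (n - d))%nat by lia.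
    rewrite ex_split, (ex_all_good q l (n - d)) by auto.
    pose proof (ex_bounds q l d j). lia.
  - pose proof (ex_bounds q l n j). lia.
Qed.

Lemma powerRZ_mono L e1 e2 : 1 <= L -> (e1 <= e2)%Z -> powerRZ L e1 <= powerRZ L e2.
Proof.
  intros HL He. rewrite !powerRZ_Rpower by lra. apply Rle_Rpower; auto. apply IZR_le; auto.
Qed.

Lemma G1 L eta : 1 < L -> 0 < eta -> exists E, (0 <= E)%Z /\ forall e, (e <= - E)%Z -> powerRZ L e <= eta.
Proof.
  intros HL He.
  destruct (pow_lt_1_zero (/ L)) with eta as [M HM]; auto.
  { rewrite Rabs_right. rewrite <- Rinv_1. apply Rinv_lt_contravar; lra. left; apply Rinv_0_lt_compat; lra. }
  exists (Z.of_nat M). split; [lia|]. intros e Hee.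
  eapply Rle_trans. apply powerRZ_mono with (e2 := (- Z.of_nat M)%Z); [lra|lia].
  rewrite powerRZ_neg', <- pow_powerRZ, <- pow_inv.
  specialize (HM M (le_n _)). rewrite Rabs_right in HM. lra.
  apply Rle_ge, pow_le. left; apply Rinv_0_lt_compat; lra.
Qed.

Lemma cw_inv_abs q lam l n j : lam <> 0 -> / Rabs (cw q lam l n j) = powerRZ (Rabs lam) (- ex q l n j).
Proof. intros H. rewrite cw_abs, powerRZ_neg' by auto. auto. Qed.

Lemma cw_le q lam l n j : 1 <= Rabs lam -> Rabs (cw q lam l n j) <= Rabs lam ^ n.
Proof.
  intros H. assert (lam <> 0) by (intro E; rewrite E, Rabs_R0 in H; lra).
  rewrite cw_abs, pow_powerRZ by auto. apply powerRZ_mono; auto. apply ex_bounds.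
Qed.

Lemma EV_S q lam l R eta : (0 < q)%Z -> 1 < Rabs lam -> 0 < eta ->
  exists n0, forall n, (n0 <= n)%nat -> forall t, (- R <= t <= R)%Z -> / Rabs (cw q lam l n t) <= eta.
Proof.
  intros Hq HL He. assert (Hl0 : lam <> 0) by (intro E; rewrite E, Rabs_R0 in HL; lra).
  destruct (G1 _ _ HL He) as [E [HE0 HE]].
  set (d := Z.to_nat (Z.abs R + Z.abs l)).
  exists (2 * d + Z.to_nat E)%nat. intros n Hn t Ht.
  rewrite cw_inv_abs by auto. apply HE.
  pose proof (ex_lower q l n d t Hq). assert (Hd : (l <= t + Z.of_nat d * q)%Z) by (unfold d; nia).
  specialize (H Hd). lia.
Qed.

Lemma EV_T q lam l R eta : (0 < q)%Z -> 1 < Rabs lam -> 0 < eta ->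
  exists n0, forall n, (n0 <= n)%nat -> forall t, (- R <= t <= R)%Z -> Rabs (cw q lam l n (t - Z.of_nat n * q)) <= eta.
Proof.
  intros Hq HL He. assert (Hl0 : lam <> 0) by (intro E; rewrite E, Rabs_R0 in HL; lra).
  destruct (G1 _ _ HL He) as [E [HE0 HE]].
  set (d := Z.to_nat (Z.abs R + Z.abs l)).
  exists (2 * d + Z.to_nat E)%nat. intros n Hn t Ht.
  rewrite cw_abs by auto. apply HE.
  pose proof (ex_upper q l n (n - d) (t - Z.of_nat n * q) Hq).
  assert (Hd : (t - Z.of_nat n * q + Z.of_nat (n - d) * q <= l)%Z).
  { rewrite Nat2Z.inj_sub by lia. unfold d. nia. }
  specialize (H ltac:(lia) Hd). lia.
Qed.

Lemma EV_up qk lamk lk qi lami li R eta : (0 < qi)%Z -> 1 < Rabs lamk -> Rabs lamk < Rabs lami -> 0 < eta ->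
  exists n0, forall n, (n0 <= n)%nat -> forall j t, (- R <= t <= R)%Z ->
    Rabs (cw qk lamk lk n j) * / Rabs (cw qi lami li n t) <= eta.
Proof.
  intros Hq HL HLL He.
  assert (Hli : lami <> 0) by (intro E; rewrite E, Rabs_R0 in HLL; lra).
  set (d := Z.to_nat (Z.abs R + Z.abs li)).
  set (C := powerRZ (Rabs lami) (2 * Z.of_nat d)).
  assert (HC : 0 < C) by (apply powerRZ_lt; lra).
  destruct (pow_lt_1_zero (Rabs lamk / Rabs lami)) with (eta / C) as [M HM].
  { rewrite Rabs_right. unfold Rdiv; apply (Rmult_lt_reg_r (Rabs lami)); [lra|]; rewrite Rmult_assoc, Rinv_l by lra; lra. apply Rle_ge, Rdiv_le_0_compat; lra. }
  { apply Rdiv_lt_0_compat; lra. }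
  exists M. intros n Hn j t Ht.
  rewrite cw_inv_abs by auto.
  eapply Rle_trans.
  { apply Rmult_le_compat. apply Rabs_pos. apply powerRZ_le; lra.
    apply cw_le; lra.
    apply powerRZ_mono with (e2 := (2 * Z.of_nat d - Z.of_nat n)%Z); [lra|].
    pose proof (ex_lower qi li n d t Hq). assert (Hd : (li <= t + Z.of_nat d * qi)%Z) by (unfold d; nia).
    specialize (H Hd). lia. }
  replace (2 * Z.of_nat d - Z.of_nat n)%Z with (2 * Z.of_nat d + - Z.of_nat n)%Z by lia.
  rewrite powerRZ_add, powerRZ_neg', <- pow_powerRZ by lra. fold C.
  specialize (HM n Hn). rewrite Rabs_right in HM.
  2: { apply Rle_ge, pow_le, Rdiv_le_0_compat; lra. }
  unfold Rdiv in HM. rewrite Rpow_mult_distr, pow_inv in HM.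
  assert (0 < Rabs lami ^ n) by (apply pow_lt; lra).
  apply Rmult_lt_compat_r with (r := C) in HM; auto.
  replace (eta * / C * C) with eta in HM by (field; lra).
  replace (Rabs lamk ^ n * (C * / Rabs lami ^ n)) with (Rabs lamk ^ n * / Rabs lami ^ n * C) by ring. lra.
Qed.

Lemma EV_down qk lamk lk qi lami li R eta : (0 < qi)%Z -> (2 * qi < qk)%Z -> 1 < Rabs lamk -> 1 < Rabs lami -> 0 < eta ->
  exists n0, forall n, (n0 <= n)%nat -> forall t, (- R <= t <= R)%Z ->
    Rabs (cw qk lamk lk n (t - Z.of_nat n * (qk - qi))) * / Rabs (cw qi lami li n t) <= eta.
Proof.
  intros Hq Hqq HLk HLi He.
  assert (Hli : lami <> 0) by (intro E; rewrite E, Rabs_R0 in HLi; lra).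
  assert (Hlk : lamk <> 0) by (intro E; rewrite E, Rabs_R0 in HLk; lra).
  set (d := Z.to_nat (Z.abs R + Z.abs li)).
  set (C := powerRZ (Rabs lami) (2 * Z.of_nat d)).
  assert (HC : 0 < C) by (apply powerRZ_lt; lra).
  destruct (G1 (Rabs lamk) (eta / C)) as [E [HE0 HE]]; auto. apply Rdiv_lt_0_compat; lra.
  set (D := (Z.abs R + Z.abs lk)%Z).
  exists (Z.to_nat (2 * D + 2 * qk + qk * E) + Z.to_nat D)%nat.
  intros n Hn t Ht.
  rewrite cw_inv_abs by auto.
  set (x := (Z.of_nat n * (qk - qi) - D)%Z).
  assert (Hx0 : (0 <= x)%Z) by (unfold x, D; nia).
  pose proof (Z.mul_div_le x qk ltac:(lia)) as H1.
  pose proof (Z.mul_succ_div_gt x qk ltac:(lia)) as H2.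
  pose proof (Z.div_pos x qk Hx0 ltac:(lia)) as H3.
  set (y := (x / qk)%Z) in *.
  set (a := Z.to_nat y).
  assert (Ha : Z.of_nat a = y) by (unfold a; lia).
  assert (Han : (a <= n)%nat) by (unfold x in *; nia).
  pose proof (ex_upper qk lk n a (t - Z.of_nat n * (qk - qi)) ltac:(lia) Han) as Hu.
  assert (Hc : (t - Z.of_nat n * (qk - qi) + Z.of_nat a * qk <= lk)%Z) by (unfold x, D in *; nia).
  specialize (Hu Hc).
  assert (HE' : (Z.of_nat n - 2 * Z.of_nat a <= - E)%Z).
  { assert (qk * (Z.of_nat n - 2 * Z.of_nat a) < qk * (- E + 1))%Z by (unfold x, D in *; nia). nia. }
  eapply Rle_trans.
  { apply Rmult_le_compat. apply Rabs_pos. apply powerRZ_le; lra.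
    rewrite cw_abs by auto. apply HE. lia.
    apply powerRZ_mono with (e2 := (2 * Z.of_nat d)%Z); [lra|].
    pose proof (ex_lower qi li n d t Hq). assert (Hd : (li <= t + Z.of_nat d * qi)%Z) by (unfold d; nia).
    specialize (H Hd). lia. }
  fold C. unfold Rdiv. rewrite Rmult_assoc, Rinv_l by lra. lra.
Qed.

Lemma ps_ext_lt a b w : (forall k, (k < w)%nat -> a k = b k) -> ps a w = ps b w.
Proof. intros H; induction w; simpl; auto. rewrite IHw, H; auto. Qed.

Lemma ps_le_lt a b w : (forall k, (k < w)%nat -> a k <= b k) -> ps a w <= ps b w.
Proof. intros H; induction w; simpl. lra. pose proof (H w (le_n _)). assert (ps a w <= ps b w) by auto. lra. Qed.

Lemma ps_const c w : ps (fun _ => c) w = INR w * c.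
Proof. induction w; simpl ps; [simpl; lra|]. rewrite IHw, S_INR. lra. Qed.

Lemma ps_nonneg_lt a w : (forall k, (k < w)%nat -> 0 <= a k) -> 0 <= ps a w.
Proof. intros H. pose proof (ps_le_lt (fun _ => 0) a w H). rewrite ps_const in H0. lra. Qed.

Lemma ps_zero a w : (forall k, (k < w)%nat -> a k = 0) -> ps a w = 0.
Proof. intros H. rewrite (ps_ext_lt a (fun _ => 0)) by auto. rewrite ps_const. lra. Qed.

Lemma ps_add_range a w r : ps a (w + r) = ps a w + ps (fun i => a (w + i)%nat) r.
Proof. induction r; simpl. rewrite Nat.add_0_r; lra. rewrite Nat.add_succ_r. simpl. rewrite IHr. lra. Qed.

Lemma ps_split3 a m A : (m < A)%nat ->
  ps a A = ps a m + a m + ps (fun r => a (S m + r)%nat) (A - S m).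
Proof.
  intros H. replace A with (S m + (A - S m))%nat at 1 by lia.
  rewrite ps_add_range. change (ps a (S m)) with (ps a m + a m). lra.
Qed.

Lemma ps_extend a A0 A : (A0 <= A)%nat -> (forall k, (A0 <= k)%nat -> a k = 0) -> ps a A = ps a A0.
Proof.
  intros H Hz. replace A with (A0 + (A - A0))%nat by lia. rewrite ps_add_range.
  rewrite (ps_zero (fun i => a (A0 + i)%nat)). lra. intros; apply Hz; lia.
Qed.

Lemma ps_single (u : R) k N : (k < N)%nat -> ps (fun i => if Nat.eqb i k then u else 0) N = u.
Proof.
  intros H. induction N. lia. simpl.
  destruct (Nat.eq_dec k N).
  - subst. rewrite Nat.eqb_refl. rewrite ps_zero. lra. intros i Hi. destruct (Nat.eqb_spec i N); [lia|auto].
  - destruct (Nat.eqb_spec N k); [lia|]. rewrite IHN by lia. lra.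
Qed.

Lemma ps_abs a w : Rabs (ps a w) <= ps (fun k => Rabs (a k)) w.
Proof. induction w; simpl. rewrite Rabs_R0; lra. eapply Rle_trans; [apply Rabs_triang|]. lra. Qed.

Lemma ps_geo w : ps (fun r => (1/2) ^ (S r)) w <= 1 - (1/2) ^ w.
Proof. induction w; simpl ps. simpl; lra. simpl pow in *. lra. Qed.

Lemma ps_geo_le1 w : ps (fun r => (1/2) ^ (S r)) w <= 1.
Proof. pose proof (ps_geo w). pose proof (pow_le (1/2) w ltac:(lra)). lra. Qed.

Lemma pf_le_win g h w : (forall j, (- Z.of_nat w <= j < Z.of_nat w)%Z -> g j <= h j) -> pf g w <= pf h w.
Proof.
  intros H. unfold pf. apply ps_le_lt. intros k Hk. unfold zfold.
  pose proof (H (Z.of_nat k) ltac:(lia)). pose proof (H (- Z.of_nat k - 1)%Z ltac:(lia)). lra.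
Qed.

Lemma ind_shift c len j s : ind c len (j + s)%Z = ind (c - s) len j.
Proof.
  unfold ind. destruct (Z.leb_spec c (j + s)), (Z.ltb_spec (j + s) (c + len)),
    (Z.leb_spec (c - s) j), (Z.ltb_spec j (c - s + len)); simpl; auto; lia.
Qed.

Lemma ind_in c len j : (c <= j < c + len)%Z -> ind c len j = 1.
Proof. intros H. unfold ind. destruct (Z.leb_spec c j), (Z.ltb_spec j (c + len)); simpl; auto; lia. Qed.

Lemma fin_ev (P : nat -> nat -> Prop) M :
  (forall i, (i < M)%nat -> exists n0, forall n, (n0 <= n)%nat -> P i n) ->
  exists n0, forall n, (n0 <= n)%nat -> forall i, (i < M)%nat -> P i n.
Proof.
  induction M; intros H.
  - exists O. intros; lia.
  - destruct IHM as [a Ha]. { intros i Hi; apply H; lia. }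
    destruct (H M (le_n _)) as [b Hb].
    exists (Nat.max a b). intros n Hn i Hi.
    destruct (Nat.eq_dec i M). subst; apply Hb; lia. apply Ha; lia.
Qed.

Lemma ev_and (P Q : nat -> Prop) :
  (exists n0, forall n, (n0 <= n)%nat -> P n) -> (exists n0, forall n, (n0 <= n)%nat -> Q n) ->
  exists n0, forall n, (n0 <= n)%nat -> P n /\ Q n.
Proof.
  intros [a Ha] [b Hb]. exists (Nat.max a b). intros n Hn. split; [apply Ha|apply Hb]; lia.
Qed.

Lemma ps_ge_term a w k : (forall i, 0 <= a i) -> (k < w)%nat -> a k <= ps a w.
Proof.
  intros H Hk. induction w. lia. simpl. destruct (Nat.eq_dec k w).
  - subst. pose proof (ps_nonneg a w H). lra.
  - pose proof (H w). assert (a k <= ps a w) by (apply IHw; lia). lra.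
Qed.

Lemma ps_minus a b w : ps (fun k => a k - b k) w = ps a w - ps b w.
Proof. induction w; simpl; lra. Qed.

Section Constr.
Variables (N : nat) (q l : nat -> Z) (lam : nat -> R).
Hypothesis HN : (2 <= N)%nat.
Hypothesis Hq : forall i, (i < N)%nat -> (0 < q i)%Z.
Hypothesis Hqq : forall s t, (s < t)%nat -> (t < N)%nat -> (2 * q s < q t)%Z.
Hypothesis HL : forall s t, (s < t)%nat -> (t < N)%nat -> 1 < Rabs (lam s) /\ Rabs (lam s) < Rabs (lam t).
Variables (Kc : nat -> nat) (U : nat -> nat -> Z -> R) (Bc : nat -> R).
Hypothesis HU0 : forall m i j, (j < - (Z.of_nat (Kc m) + 1) \/ Z.of_nat (Kc m) + 1 <= j)%Z -> U m i j = 0.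
Hypothesis HUB : forall m i j, Rabs (U m i j) <= Bc m.

Lemma Bc_nn m : 0 <= Bc m.
Proof. pose proof (HUB m 0 0%Z). pose proof (Rabs_pos (U m 0 0%Z)). lra. Qed.

Lemma L_gt1 i : (i < N)%nat -> 1 < Rabs (lam i).
Proof.
  intros Hi. destruct (Nat.eq_dec i (N - 1)).
  - destruct (HL 0 (N-1)) as [H1 H2]; try lia. subst; lra.
  - destruct (HL i (N-1)); try lia; auto.
Qed.

Definition Lmax := Rabs (lam (N - 1)).
Lemma Lmax_ge i : (i < N)%nat -> Rabs (lam i) <= Lmax.
Proof.
  intros Hi. unfold Lmax. destruct (Nat.eq_dec i (N - 1)). subst; lra.
  destruct (HL i (N-1)); try lia; lra.
Qed.
Lemma Lmax_gt1 : 1 < Lmax.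
Proof. apply L_gt1; lia. Qed.

Definition Qm := q (N - 1).
Lemma q_le i : (i < N)%nat -> (q i <= Qm)%Z.
Proof.
  intros Hi. unfold Qm. destruct (Nat.eq_dec i (N - 1)). subst; lia.
  pose proof (Hqq i (N-1) ltac:(lia) ltac:(lia)). pose proof (Hq i Hi). lia.
Qed.
Lemma lam_nz i : (i < N)%nat -> lam i <> 0.
Proof. intros Hi E. pose proof (L_gt1 i Hi). rewrite E, Rabs_R0 in H. lra. Qed.

Definition cwi i n j := cw (q i) (lam i) (l i) n j.

Definition epsm m := / (INR (Kc m) + 1).
Definition KS m := ps (fun i => INR (Kc i)) (S m).
Definition delta m := (1/2) ^ (S m) / (INR (2 * Kc m + 2) * INR N * (1 + KS m)).
Definition Vb (np : nat) := (2 * Z.of_nat np * Qm + 1)%Z.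

Lemma epsm_pos m : 0 < epsm m.
Proof. unfold epsm. apply Rinv_0_lt_compat. pose proof (pos_INR (Kc m)); lra. Qed.
Lemma KS_nn m : 0 <= KS m.
Proof. unfold KS. apply ps_nonneg. intros; apply pos_INR. Qed.
Lemma INR_N_pos : 0 < INR N.
Proof. apply lt_0_INR; lia. Qed.
Lemma delta_pos m : 0 < delta m.
Proof.
  unfold delta. apply Rdiv_lt_0_compat. apply pow_lt; lra.
  pose proof (KS_nn m). pose proof INR_N_pos. assert (0 < INR (2 * Kc m + 2)) by (apply lt_0_INR; lia).
  apply Rmult_lt_0_compat; [apply Rmult_lt_0_compat|]; lra.
Qed.
Lemma Vb_pos np : (1 <= Vb np)%Z.
Proof. unfold Vb, Qm. pose proof (Hq (N-1) ltac:(lia)). lia. Qed.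

Definition Cond m np n : Prop :=
  (np < n)%nat /\ (Kc m + m + 1 <= n)%nat /\
  (forall i, (i < N)%nat -> forall t, (- (Z.of_nat (Kc m) + 1) <= t <= Z.of_nat (Kc m))%Z ->
     Bc m * Lmax ^ np * / Rabs (cwi i n t) <= delta m) /\
  (forall k, (k < N)%nat -> forall t, (- Vb np <= t <= Vb np)%Z ->
     Rabs (cwi k n (t - Z.of_nat n * q k)) <= epsm m / IZR (2 * Vb np + 1)) /\
  (forall i k, (i < N)%nat -> (k < N)%nat -> i <> k ->
     forall t, (- (Z.of_nat (Kc m) + 1) <= t <= Z.of_nat (Kc m))%Z ->
     Bc m * Rabs (cwi k n (t + Z.of_nat n * (q i - q k))) * / Rabs (cwi i n t) <= epsm m / (INR N * INR (2 * Kc m + 2))).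

Lemma EVC m np : exists n0, forall n, (n0 <= n)%nat -> Cond m np n.
Proof.
  set (K := (Z.of_nat (Kc m) + 1)%Z).
  assert (HBp : 0 < Bc m + 1) by (pose proof (Bc_nn m); lra).
  assert (HLp : 0 < Lmax ^ np) by (apply pow_lt; pose proof Lmax_gt1; lra).
  assert (HC1 : exists n0, forall n, (n0 <= n)%nat -> (np < n /\ Kc m + m + 1 <= n)%nat).
  { exists (S np + Kc m + m + 1)%nat. intros; lia. }
  assert (HC2 : exists n0, forall n, (n0 <= n)%nat -> forall i, (i < N)%nat -> forall t, (- (Z.of_nat (Kc m) + 1) <= t <= Z.of_nat (Kc m))%Z ->
     Bc m * Lmax ^ np * / Rabs (cwi i n t) <= delta m).
  { apply (fin_ev (fun i n => forall t, (- (Z.of_nat (Kc m) + 1) <= t <= Z.of_nat (Kc m))%Z ->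
     Bc m * Lmax ^ np * / Rabs (cwi i n t) <= delta m)).
    intros i Hi.
    destruct (EV_S (q i) (lam i) (l i) K (delta m / ((Bc m + 1) * Lmax ^ np))) as [n0 Hn0]; auto.
    { apply L_gt1; auto. }
    { apply Rdiv_lt_0_compat. apply delta_pos. apply Rmult_lt_0_compat; lra. }
    exists n0. intros n Hn t Ht. specialize (Hn0 n Hn t ltac:(unfold K; lia)).
    unfold cwi. pose proof (Bc_nn m).
    assert (0 <= / Rabs (cw (q i) (lam i) (l i) n t)).
    { left; apply Rinv_0_lt_compat, Rabs_pos_lt, cw_nz, lam_nz; auto. }
    apply Rmult_le_compat_l with (r := (Bc m + 1) * Lmax ^ np) in Hn0; [|apply Rmult_le_pos; lra].
    replace ((Bc m + 1) * Lmax ^ np * (delta m / ((Bc m + 1) * Lmax ^ np))) with (delta m) in Hn0 by (field; lra).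
    eapply Rle_trans; [|exact Hn0]. apply Rmult_le_compat_r; auto. nra. }
  assert (HC3 : exists n0, forall n, (n0 <= n)%nat -> forall k, (k < N)%nat -> forall t, (- Vb np <= t <= Vb np)%Z ->
     Rabs (cwi k n (t - Z.of_nat n * q k)) <= epsm m / IZR (2 * Vb np + 1)).
  { apply (fin_ev (fun k n => forall t, (- Vb np <= t <= Vb np)%Z ->
     Rabs (cwi k n (t - Z.of_nat n * q k)) <= epsm m / IZR (2 * Vb np + 1))).
    intros k Hk. apply EV_T; auto. apply L_gt1; auto.
    apply Rdiv_lt_0_compat. apply epsm_pos. apply IZR_lt. pose proof (Vb_pos np). lia. }
  assert (HC4 : exists n0, forall n, (n0 <= n)%nat -> forall i, (i < N)%nat -> forall k, (k < N)%nat -> i <> k ->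
     forall t, (- (Z.of_nat (Kc m) + 1) <= t <= Z.of_nat (Kc m))%Z ->
     Bc m * Rabs (cwi k n (t + Z.of_nat n * (q i - q k))) * / Rabs (cwi i n t) <= epsm m / (INR N * INR (2 * Kc m + 2))).
  { apply (fin_ev (fun i n => forall k, (k < N)%nat -> i <> k ->
     forall t, (- (Z.of_nat (Kc m) + 1) <= t <= Z.of_nat (Kc m))%Z ->
     Bc m * Rabs (cwi k n (t + Z.of_nat n * (q i - q k))) * / Rabs (cwi i n t) <= epsm m / (INR N * INR (2 * Kc m + 2)))).
    intros i Hi.
    apply (fin_ev (fun k n => i <> k ->
     forall t, (- (Z.of_nat (Kc m) + 1) <= t <= Z.of_nat (Kc m))%Z ->
     Bc m * Rabs (cwi k n (t + Z.of_nat n * (q i - q k))) * / Rabs (cwi i n t) <= epsm m / (INR N * INR (2 * Kc m + 2)))).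
    intros k Hk.
    set (eta := epsm m / (INR N * INR (2 * Kc m + 2)) / (Bc m + 1)).
    assert (Heta : 0 < eta).
    { unfold eta. apply Rdiv_lt_0_compat; auto. apply Rdiv_lt_0_compat. apply epsm_pos.
      apply Rmult_lt_0_compat. apply INR_N_pos. apply lt_0_INR; lia. }
    assert (Hfin : forall n t, Rabs (cwi k n (t + Z.of_nat n * (q i - q k))) * / Rabs (cwi i n t) <= eta ->
       Bc m * Rabs (cwi k n (t + Z.of_nat n * (q i - q k))) * / Rabs (cwi i n t) <= epsm m / (INR N * INR (2 * Kc m + 2))).
    { intros n t H. pose proof (Bc_nn m).
      assert (0 <= Rabs (cwi k n (t + Z.of_nat n * (q i - q k))) * / Rabs (cwi i n t)).
      { apply Rmult_le_pos. apply Rabs_pos. left; apply Rinv_0_lt_compat, Rabs_pos_lt, cw_nz, lam_nz; auto. }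
      rewrite Rmult_assoc.
      set (z := Rabs (cwi k n (t + Z.of_nat n * (q i - q k))) * / Rabs (cwi i n t)) in *. apply Rle_trans with ((Bc m + 1) * eta). nra.
      unfold eta. right. assert (INR N <> 0) by (apply Rgt_not_eq, INR_N_pos). assert (INR (2 * Kc m + 2) <> 0) by (apply Rgt_not_eq, lt_0_INR; lia). field; repeat split; auto; lra. }
    destruct (lt_eq_lt_dec i k) as [[Hik|Hik]|Hik].
    - destruct (EV_down (q k) (lam k) (l k) (q i) (lam i) (l i) K eta (Hq i Hi) (Hqq i k Hik Hk) (L_gt1 k Hk) (L_gt1 i Hi) Heta) as [n0 Hn0].
      exists n0. intros n Hn _ t Ht. apply Hfin. unfold cwi.
      replace (t + Z.of_nat n * (q i - q k))%Z with (t - Z.of_nat n * (q k - q i))%Z by ring.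
      apply Hn0; auto. unfold K; lia.
    - exists O. intros n _ H. contradiction.
    - destruct (EV_up (q k) (lam k) (l k) (q i) (lam i) (l i) K eta (Hq i Hi) (L_gt1 k Hk) (proj2 (HL k i Hik Hi)) Heta) as [n0 Hn0].
      exists n0. intros n Hn _ t Ht. apply Hfin. unfold cwi. apply Hn0; auto. unfold K; lia. }
  destruct HC1 as [a1 H1], HC2 as [a2 H2], HC3 as [a3 H3], HC4 as [a4 H4].
  exists (Nat.max a1 (Nat.max a2 (Nat.max a3 a4))). intros n Hn.
  split; [apply H1; lia|]. split; [apply H1; lia|].
  split; [apply H2; lia|]. split; [apply H3; lia|].
  intros i k Hi Hk Hik. apply H4; auto; lia.
Qed.

Definition pick m np : nat := proj1_sig (constructive_indefinite_description _ (EVC m np)).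
Lemma pick_spec m np n : (pick m np <= n)%nat -> Cond m np n.
Proof. unfold pick. destruct (constructive_indefinite_description _ (EVC m np)) as [n0 H]. simpl. auto. Qed.

Fixpoint nseq (m : nat) : nat :=
  match m with O => pick O O | S m' => pick (S m') (nseq m') end.
Definition prevn (m : nat) : nat := match m with O => O | S m' => nseq m' end.

Lemma nseq_cond m : Cond m (prevn m) (nseq m).
Proof. destruct m; simpl; apply pick_spec; lia. Qed.

Lemma nseq_lt m : (nseq m < nseq (S m))%nat.
Proof. destruct (nseq_cond (S m)) as [H _]. simpl in H. auto. Qed.

Lemma nseq_mono m1 m2 : (m1 <= m2)%nat -> (nseq m1 <= nseq m2)%nat.
Proof. intros H; induction H; auto. pose proof (nseq_lt m); lia. Qed.

Lemma prevn_ge m m' : (m < m')%nat -> (nseq m <= prevn m')%nat.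
Proof. intros H. destruct m'. lia. simpl. apply nseq_mono; lia. Qed.

Lemma prevn_le m : (prevn m <= nseq m)%nat.
Proof. destruct (nseq_cond m) as [H _]. lia. Qed.

Lemma nseq_big m : (Kc m + m + 1 <= nseq m)%nat.
Proof. destruct (nseq_cond m) as [_ [H _]]. auto. Qed.

Definition beta m i j :=
  U m i (j - Z.of_nat (nseq m) * q i)%Z * / cwi i (nseq m) (j - Z.of_nat (nseq m) * q i)%Z.

Definition bwin m i : Z := (Z.of_nat (nseq m) * q i - Z.of_nat (Kc m) - 1)%Z.
Definition blen m : Z := (2 * Z.of_nat (Kc m) + 2)%Z.

Lemma beta_zero m i j : (j < bwin m i \/ bwin m i + blen m <= j)%Z -> beta m i j = 0.
Proof.
  intros H. unfold beta. rewrite HU0. lra. unfold bwin, blen in H. lia.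
Qed.

Lemma beta_bound_c m i j c : (i < N)%nat -> Rabs c <= Lmax ^ prevn m ->
  Rabs (c * beta m i j) <= delta m * ind (bwin m i) (blen m) j.
Proof.
  intros Hi Hc.
  destruct (Z_lt_le_dec j (bwin m i)) as [H|H].
  { rewrite beta_zero by lia. rewrite Rmult_0_r, Rabs_R0. apply Rmult_le_pos. left; apply delta_pos. apply ind_nonneg. }
  destruct (Z_lt_le_dec j (bwin m i + blen m)) as [H'|H'].
  2: { rewrite beta_zero by lia. rewrite Rmult_0_r, Rabs_R0. apply Rmult_le_pos. left; apply delta_pos. apply ind_nonneg. }
  rewrite ind_in by lia. rewrite Rmult_1_r.
  destruct (nseq_cond m) as [_ [_ [C2 _]]].
  specialize (C2 i Hi (j - Z.of_nat (nseq m) * q i)%Z ltac:(unfold bwin, blen in *; lia)).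
  unfold beta. rewrite !Rabs_mult, Rabs_inv.
  eapply Rle_trans; [|exact C2].
  assert (0 <= / Rabs (cwi i (nseq m) (j - Z.of_nat (nseq m) * q i)))
    by (left; apply Rinv_0_lt_compat, Rabs_pos_lt, cw_nz, lam_nz; auto).
  pose proof (HUB m i (j - Z.of_nat (nseq m) * q i)%Z). pose proof (Rabs_pos c).
  pose proof (Rabs_pos (U m i (j - Z.of_nat (nseq m) * q i))). pose proof (Bc_nn m).
  set (a := Rabs c) in *. set (b := Rabs (U m i (j - Z.of_nat (nseq m) * q i))) in *.
  set (e := / Rabs (cwi i (nseq m) (j - Z.of_nat (nseq m) * q i))) in *.
  rewrite Rmult_assoc. rewrite (Rmult_comm (Bc m)), Rmult_assoc.
  apply Rmult_le_compat; try nra.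
Qed.

Lemma beta_bound m i j : (i < N)%nat -> Rabs (beta m i j) <= delta m * ind (bwin m i) (blen m) j.
Proof.
  intros Hi. rewrite <- (Rmult_1_l (beta m i j)). apply beta_bound_c; auto.
  rewrite Rabs_R1. apply pow_R1_Rle. pose proof Lmax_gt1; lra.
Qed.

Lemma beta_far m i j : (i < N)%nat -> beta m i j <> 0 -> (Z.of_nat m <= j <= 2 * Z.of_nat (nseq m) * Qm)%Z.
Proof.
  intros Hi H. destruct (Z_lt_le_dec j (bwin m i)). { elim H; apply beta_zero; lia. }
  destruct (Z_lt_le_dec j (bwin m i + blen m)). 2: { elim H; apply beta_zero; lia. }
  pose proof (nseq_big m). pose proof (Hq i Hi). pose proof (q_le i Hi).
  unfold bwin, blen in *. nia.
Qed.

Definition Xs (A : nat) (j : Z) : R := ps (fun m => ps (fun i => beta m i j) N) A.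
Definition X (j : Z) : R := Xs (S (Z.to_nat (Z.abs j))) j.

Lemma X_Xs A j : (Z.to_nat (Z.abs j) < A)%nat -> X j = Xs A j.
Proof.
  intros H. unfold X, Xs. symmetry. apply ps_extend. lia.
  intros m Hm. apply ps_zero. intros i Hi.
  destruct (Req_dec (beta m i j) 0) as [E|E]; auto.
  apply beta_far in E; auto. lia.
Qed.

Lemma ps_Ndelta A : ps (fun m => INR N * delta m * IZR (blen m)) A <= 1.
Proof.
  eapply Rle_trans; [|apply (ps_geo_le1 A)]. apply ps_le. intros m.
  unfold delta, blen. pose proof (KS_nn m). pose proof INR_N_pos.
  assert (E : IZR (2 * Z.of_nat (Kc m) + 2) = INR (2 * Kc m + 2)).
  { replace (2 * Z.of_nat (Kc m) + 2)%Z with (Z.of_nat (2 * Kc m + 2)) by lia. rewrite <- INR_IZR_INZ. auto. }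
  rewrite E. assert (0 < INR (2 * Kc m + 2)) by (apply lt_0_INR; lia).
  assert (0 < (1/2) ^ S m) by (apply pow_lt; lra).
  replace (INR N * ((1 / 2) ^ S m / (INR (2 * Kc m + 2) * INR N * (1 + KS m))) * INR (2 * Kc m + 2))
    with ((1 / 2) ^ S m / (1 + KS m)) by (field; lra).
  unfold Rdiv at 1. rewrite <- (Rmult_1_r ((1/2) ^ S m)) at 2. apply Rmult_le_compat_l; [lra|].
  rewrite <- Rinv_1. apply Rinv_le_contravar; lra.
Qed.

Lemma blen_ge1 m : 1 <= IZR (blen m).
Proof. unfold blen. apply IZR_le. lia. Qed.

Lemma Xs_abs A j : Rabs (Xs A j) <= 1.
Proof.
  unfold Xs. eapply Rle_trans; [apply ps_abs|].
  eapply Rle_trans; [|apply (ps_Ndelta A)]. apply ps_le. intros m.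
  eapply Rle_trans; [apply ps_abs|].
  eapply Rle_trans. apply ps_le_lt with (b := fun _ => delta m).
  { intros i Hi. eapply Rle_trans; [apply beta_bound; auto|].
    unfold ind. destruct (andb _ _); pose proof (delta_pos m); lra. }
  rewrite ps_const. pose proof (blen_ge1 m). pose proof (delta_pos m). pose proof INR_N_pos.
  rewrite <- (Rmult_1_r (INR N * delta m)) at 1. apply Rmult_le_compat_l; nra.
Qed.

Lemma X_abs j : Rabs (X j) <= 1.
Proof. apply Xs_abs. Qed.

Lemma pf_beta m i w c : (i < N)%nat -> (forall j, Rabs (c j) <= Lmax ^ prevn m) ->
  forall s, pf (fun j => Rabs (c j * beta m i (j + s)%Z)) w <= delta m * IZR (blen m).
Proof.
  intros Hi Hc s. apply pf_supp with (c := (bwin m i - s)%Z). unfold blen; lia. left; apply delta_pos.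
  intros j. split. apply Rabs_pos. rewrite <- ind_shift. apply beta_bound_c; auto.
Qed.

Lemma X_mass w : pf (fun j => Rabs (X j)) w <= 1.
Proof.
  eapply Rle_trans.
  { apply pf_le_win with (h := fun j => ps (fun m => ps (fun i => Rabs (1 * beta m i (j + 0)%Z)) N) (S w)).
    intros j Hj. rewrite (X_Xs (S w)) by lia. unfold Xs.
    eapply Rle_trans; [apply ps_abs|]. apply ps_le. intros m.
    eapply Rle_trans; [apply ps_abs|]. apply ps_le. intros i. rewrite Rmult_1_l, Z.add_0_r. lra. }
  rewrite pf_swap. eapply Rle_trans; [|apply (ps_Ndelta (S w))]. apply ps_le. intros m.
  rewrite pf_swap. eapply Rle_trans. apply ps_le_lt with (b := fun _ => delta m * IZR (blen m)).
  { intros i Hi. apply pf_beta; auto. intros; rewrite Rabs_R1. apply pow_R1_Rle. pose proof Lmax_gt1; lra. }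
  rewrite ps_const. lra.
Qed.

Lemma X_in_lp p : 1 <= p -> in_lp p X.
Proof.
  intros Hp. unfold in_lp. apply (pf_BND (fun j => abspow (X j) p) 1).
  intros; apply AP0. intros w. eapply Rle_trans; [|apply (X_mass w)].
  apply pf_le. intros j. apply AP_le1; auto. apply X_abs.
Qed.


Lemma Ndelta_later m m' : (m < m')%nat -> INR N * delta m' * IZR (blen m') <= (1/2) ^ (S m') * epsm m.
Proof.
  intros H. unfold delta, blen, epsm. pose proof (KS_nn m'). pose proof INR_N_pos.
  assert (E : IZR (2 * Z.of_nat (Kc m') + 2) = INR (2 * Kc m' + 2)).
  { replace (2 * Z.of_nat (Kc m') + 2)%Z with (Z.of_nat (2 * Kc m' + 2)) by lia. rewrite <- INR_IZR_INZ. auto. }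
  rewrite E. assert (0 < INR (2 * Kc m' + 2)) by (apply lt_0_INR; lia).
  assert (0 < (1/2) ^ S m') by (apply pow_lt; lra).
  replace (INR N * ((1 / 2) ^ S m' / (INR (2 * Kc m' + 2) * INR N * (1 + KS m'))) * INR (2 * Kc m' + 2))
    with ((1 / 2) ^ S m' * / (1 + KS m')) by (field; lra).
  apply Rmult_le_compat_l; [lra|]. pose proof (pos_INR (Kc m)).
  apply Rinv_le_contravar; [lra|].
  assert (INR (Kc m) <= KS m'). { unfold KS. apply (ps_ge_term (fun i => INR (Kc i))). intros; apply pos_INR. lia. }
  lra.
Qed.

Lemma stage_est m k : (k < N)%nat -> forall w,
  pf (fun j => Rabs (Nat.iter (nseq m) (T_op (q k) (lam k) (l k)) X j - U m k j)) w <= 3 * epsm m.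
Proof.
  intros Hk w.
  set (n := nseq m).
  set (A := S (Z.to_nat (Z.of_nat w + Z.of_nat n * q k) + m)).
  set (sh := (Z.of_nat n * q k)%Z).
  set (D := fun i j => if Nat.eqb i k then 0 else cwi k n j * beta m i (j + sh)%Z).
  set (Tl := fun j => ps (fun r => ps (fun i => Rabs (cwi k n j * beta (S m + r) i (j + sh)%Z)) N) (A - S m)).
  set (h := fun j => Rabs (cwi k n j) * Rabs (Xs m (j + sh)%Z) + ps (fun i => Rabs (D i j)) N + Tl j).
  pose proof (Hq k Hk) as Hqk.
  assert (Hcnz : forall j, cwi k n j <> 0) by (intros; apply cw_nz, lam_nz; auto).
  eapply Rle_trans.
  { apply pf_le_win with (h := h). intros j Hj.
    rewrite iter_T. fold (cwi k n j). fold sh.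
    rewrite (X_Xs A) by (unfold A, sh; lia). unfold Xs.
    rewrite (ps_split3 _ m A) by (unfold A; lia).
    set (F := fun m' => ps (fun i => beta m' i (j + sh)%Z) N).
    change (Rabs (cwi k n j * (Xs m (j+sh)%Z + F m + ps (fun r => F (S m + r)%nat) (A - S m)) - U m k j) <= h j).
    assert (EU : U m k j = ps (fun i => if Nat.eqb i k then U m k j else 0) N) by (rewrite ps_single; auto).
    assert (ED : cwi k n j * F m - U m k j = ps (fun i => D i j) N).
    { rewrite EU. unfold F. rewrite <- ps_scal, <- ps_minus. apply ps_ext_lt. intros i Hi.
      unfold D. destruct (Nat.eqb_spec i k).
      - subst i. unfold beta. fold n. replace (j + sh - Z.of_nat n * q k)%Z with j by (unfold sh; lia).
        fold (cwi k n j). field. auto.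
      - lra. }
    assert (ET : Rabs (cwi k n j * ps (fun r => F (S m + r)%nat) (A - S m)) <= Tl j).
    { unfold Tl, F. rewrite <- ps_scal. eapply Rle_trans; [apply ps_abs|]. apply ps_le. intros r.
      rewrite <- ps_scal. eapply Rle_trans; [apply ps_abs|]. lra. }
    replace (cwi k n j * (Xs m (j + sh)%Z + F m + ps (fun r => F (S m + r)%nat) (A - S m)) - U m k j)
      with (cwi k n j * Xs m (j + sh)%Z + (cwi k n j * F m - U m k j) + cwi k n j * ps (fun r => F (S m + r)%nat) (A - S m)) by ring.
    rewrite ED. unfold h.
    eapply Rle_trans; [apply Rabs_triang|]. eapply Rle_trans; [apply Rplus_le_compat_r, Rabs_triang|].
    rewrite Rabs_mult. pose proof (ps_abs (fun i => D i j) N). lra. }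
  unfold h. rewrite !pf_plus.
  assert (Ha : pf (fun j => Rabs (cwi k n j) * Rabs (Xs m (j + sh)%Z)) w <= epsm m).
  { set (V := Vb (prevn m)).
    assert (HV : (1 <= V)%Z) by apply Vb_pos.
    replace (epsm m) with (epsm m / IZR (2 * V + 1) * IZR (2 * V + 1)) by (field; apply not_0_IZR; lia).
    apply pf_supp with (c := (- V - sh)%Z). lia.
    { apply Rdiv_le_0_compat. left; apply epsm_pos. apply IZR_lt; lia. }
    intros j. split. apply Rmult_le_pos; apply Rabs_pos.
    destruct (Z_le_gt_dec (- V) (j + sh)) as [H1|H1]; [destruct (Z_le_gt_dec (j + sh) V) as [H2|H2]|].
    - rewrite ind_in by lia. rewrite Rmult_1_r.
      destruct (nseq_cond m) as [_ [_ [_ [C3 _]]]]. fold n in C3. fold V in C3.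
      specialize (C3 k Hk (j + sh)%Z ltac:(lia)).
      replace (j + sh - Z.of_nat n * q k)%Z with j in C3 by (unfold sh; lia).
      pose proof (Xs_abs m (j + sh)%Z). pose proof (Rabs_pos (cwi k n j)). pose proof (Rabs_pos (Xs m (j + sh)%Z)). nra.
    - assert (E0 : Xs m (j + sh)%Z = 0).
      { unfold Xs. apply ps_zero. intros m' Hm'. apply ps_zero. intros i Hi.
        destruct (Req_dec (beta m' i (j + sh)%Z) 0) as [E|E]; auto.
        apply beta_far in E; auto. pose proof (prevn_ge m' m Hm'). unfold V, Vb in *.
        pose proof (q_le (N-1) ltac:(lia)). pose proof (Hq (N-1) ltac:(lia)). fold Qm in *. nia. }
      rewrite E0, Rabs_R0, Rmult_0_r. apply Rmult_le_pos. apply Rdiv_le_0_compat. left; apply epsm_pos. apply IZR_lt; lia. apply ind_nonneg.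
    - assert (E0 : Xs m (j + sh)%Z = 0).
      { unfold Xs. apply ps_zero. intros m' Hm'. apply ps_zero. intros i Hi.
        destruct (Req_dec (beta m' i (j + sh)%Z) 0) as [E|E]; auto.
        apply beta_far in E; auto. lia. }
      rewrite E0, Rabs_R0, Rmult_0_r. apply Rmult_le_pos. apply Rdiv_le_0_compat. left; apply epsm_pos. apply IZR_lt; lia. apply ind_nonneg. }
  assert (Hb : pf (fun j => ps (fun i => Rabs (D i j)) N) w <= epsm m).
  { rewrite pf_swap. eapply Rle_trans. apply ps_le_lt with (b := fun _ => epsm m / INR N).
    2: { rewrite ps_const. right. field. apply Rgt_not_eq, INR_N_pos. }
    intros i Hi. unfold D. destruct (Nat.eqb_spec i k).
    { unfold pf. rewrite ps_zero. apply Rdiv_le_0_compat. left; apply epsm_pos. apply INR_N_pos.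
      intros; unfold zfold; rewrite Rabs_R0; lra. }
    set (KK := Z.of_nat (Kc m)).
    assert (E2 : IZR (2 * KK + 2) = INR (2 * Kc m + 2)).
    { unfold KK. replace (2 * Z.of_nat (Kc m) + 2)%Z with (Z.of_nat (2 * Kc m + 2)) by lia. rewrite <- INR_IZR_INZ. auto. }
    assert (HK2 : 0 < INR (2 * Kc m + 2)) by (apply lt_0_INR; lia).
    replace (epsm m / INR N) with (epsm m / (INR N * INR (2 * Kc m + 2)) * IZR (2 * KK + 2))
      by (rewrite E2; field; split; lra || apply Rgt_not_eq, INR_N_pos).
    pose proof INR_N_pos.
    apply pf_supp with (c := (Z.of_nat n * (q i - q k) - KK - 1)%Z). lia.
    { apply Rdiv_le_0_compat. left; apply epsm_pos. nra. }
    intros j. split. apply Rabs_pos.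
    set (t := (j + sh - Z.of_nat n * q i)%Z).
    destruct (Z_le_gt_dec (- (KK + 1)) t) as [H1|H1]; [destruct (Z_le_gt_dec t KK) as [H2|H2]|].
    - rewrite ind_in by (unfold t, sh in *; lia). rewrite Rmult_1_r.
      destruct (nseq_cond m) as [_ [_ [_ [_ C4]]]]. fold n in C4.
      specialize (C4 i k Hi Hk n0 t ltac:(unfold KK in *; lia)).
      replace (t + Z.of_nat n * (q i - q k))%Z with j in C4 by (unfold t, sh; lia).
      eapply Rle_trans; [|exact C4]. unfold beta. fold n. fold t.
      rewrite !Rabs_mult, Rabs_inv. pose proof (HUB m i t).
      assert (0 <= / Rabs (cwi i n t)) by (left; apply Rinv_0_lt_compat, Rabs_pos_lt, cw_nz, lam_nz; auto).
      pose proof (Rabs_pos (cwi k n j)). pose proof (Rabs_pos (U m i t)).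
      set (a := Rabs (cwi k n j)) in *. set (b := Rabs (U m i t)) in *. set (e := / Rabs (cwi i n t)) in *.
      replace (Bc m * a * e) with (a * (Bc m * e)) by ring. apply Rmult_le_compat_l; auto. apply Rmult_le_compat_r; auto.
    - unfold beta. fold n. fold t. rewrite HU0 by (unfold KK in *; lia). rewrite Rmult_0_l, Rmult_0_r, Rabs_R0.
      apply Rmult_le_pos. apply Rdiv_le_0_compat. left; apply epsm_pos. nra. apply ind_nonneg.
    - unfold beta. fold n. fold t. rewrite HU0 by (unfold KK in *; lia). rewrite Rmult_0_l, Rmult_0_r, Rabs_R0.
      apply Rmult_le_pos. apply Rdiv_le_0_compat. left; apply epsm_pos. nra. apply ind_nonneg. }
  assert (Hc : pf Tl w <= epsm m).
  { unfold Tl. rewrite pf_swap.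
    eapply Rle_trans. apply ps_le with (b := fun r => epsm m * (1/2) ^ (S r)).
    2: { rewrite ps_scal. pose proof (ps_geo_le1 (A - S m)). pose proof (epsm_pos m). nra. }
    intros r. rewrite pf_swap.
    eapply Rle_trans. apply ps_le_lt with (b := fun _ => delta (S m + r) * IZR (blen (S m + r))).
    { intros i Hi. apply pf_beta; auto. intros j.
      eapply Rle_trans. apply cw_le. pose proof (L_gt1 k Hk); lra.
      eapply Rle_trans. apply pow_incr. split. apply Rabs_pos. apply Lmax_ge; auto.
      apply Rle_pow. pose proof Lmax_gt1; lra. apply prevn_ge. lia. }
    rewrite ps_const. rewrite <- Rmult_assoc. eapply Rle_trans. apply Ndelta_later with (m := m). lia.
    rewrite Rmult_comm. apply Rmult_le_compat_l. left; apply epsm_pos.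
    replace (S (S m + r)) with (S r + S m)%nat by lia. rewrite pow_add.
    assert (0 <= (1/2) ^ S m <= 1). { split. apply pow_le; lra. eapply Rle_trans; [apply pow_incr with (y := 1); lra|]. rewrite pow1; lra. }
    pose proof (pow_le (1/2) (S r) ltac:(lra)). nra. }
  lra.
Qed.


Lemma construct p : 1 <= p -> exists x, in_lp p x /\ forall m, exists n, forall k, (k < N)%nat -> forall w,
  pf (fun j => Rabs (Nat.iter n (T_op (q k) (lam k) (l k)) x j - U m k j)) w <= 3 * / (INR (Kc m) + 1).
Proof.
  intros Hp. exists X. split. apply X_in_lp; auto.
  intros m. exists (nseq m). intros k Hk w. apply stage_est; auto.
Qed.

End Constr.

Fixpoint decl (fuel n : nat) : list nat :=
  match fuel with
  | O => nil
  | S f => match n with O => nil | S n' => let (a, b) := Cantor.of_nat n' in a :: decl f b end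
  end.
Fixpoint encl (c : list nat) : nat :=
  match c with nil => O | a :: c' => S (Cantor.to_nat (a, encl c')) end.
Definition decode (n : nat) : list nat := decl n n.

Lemma decl_encl c f : (encl c <= f)%nat -> decl f (encl c) = c.
Proof.
  revert f; induction c as [|a c IH]; intros f H; cbn [encl] in *.
  - destruct f; auto.
  - destruct f as [|f]. lia. cbn [decl]. rewrite Cantor.cancel_of_to. f_equal. apply IH.
    pose proof (Cantor.to_nat_non_decreasing a (encl c)). simpl in H. lia.
Qed.

Lemma decode_encl c : decode (encl c) = c.
Proof. apply decl_encl; auto. Qed.

Definition zdec (n : nat) : Z := let (a, b) := Cantor.of_nat n in (Z.of_nat a - Z.of_nat b)%Z.
Definition zenc (z : Z) : nat := Cantor.to_nat (Z.to_nat z, Z.to_nat (- z)).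
Lemma zdec_zenc z : zdec (zenc z) = z.
Proof. unfold zdec, zenc. rewrite Cantor.cancel_of_to. lia. Qed.
Lemma zdec_0 : zdec 0 = 0%Z.
Proof. reflexivity. Qed.

Fixpoint sumabs (c : list nat) : R :=
  match c with nil => 0 | e :: c' => Rabs (IZR (zdec e)) + sumabs c' end.

Lemma sumabs_nn c : 0 <= sumabs c.
Proof. induction c; simpl. lra. pose proof (Rabs_pos (IZR (zdec a))); lra. Qed.

Lemma nth_sumabs c k : Rabs (IZR (zdec (nth k c O))) <= sumabs c.
Proof.
  revert k; induction c as [|a c IH]; intros k; simpl.
  - destruct k; rewrite zdec_0, Rabs_R0; lra.
  - destruct k. pose proof (sumabs_nn c); lra. pose proof (Rabs_pos (IZR (zdec a))). specialize (IH k). lra.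
Qed.

Definition Kc (m : nat) : nat := nth 0 (decode m) O.
Definition inwin (K : nat) (j : Z) : bool := andb (Z.leb (- (Z.of_nat K + 1)) j) (Z.ltb j (Z.of_nat K + 1)).
Definition Uc (m i : nat) (j : Z) : R :=
  if inwin (Kc m) j then
    IZR (zdec (nth (S (i * (2 * Kc m + 2) + Z.to_nat (j + Z.of_nat (Kc m) + 1))) (decode m) O)) / (INR (Kc m) + 1) ^ 2
  else 0.
Definition Bc (m : nat) : R := sumabs (decode m).

Lemma Uc0 m i j : (j < - (Z.of_nat (Kc m) + 1) \/ Z.of_nat (Kc m) + 1 <= j)%Z -> Uc m i j = 0.
Proof.
  intros H. unfold Uc, inwin. destruct (Z.leb_spec (- (Z.of_nat (Kc m) + 1)) j), (Z.ltb_spec j (Z.of_nat (Kc m) + 1)); simpl; auto; lia.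
Qed.

Lemma UcB m i j : Rabs (Uc m i j) <= Bc m.
Proof.
  unfold Uc, Bc. destruct (inwin _ _).
  - unfold Rdiv. rewrite Rabs_mult. eapply Rle_trans; [|apply nth_sumabs].
    rewrite <- (Rmult_1_r (Rabs (IZR _))) at 2. apply Rmult_le_compat_l. apply Rabs_pos.
    pose proof (pos_INR (Kc m)). rewrite Rabs_inv, Rabs_right by nra.
    rewrite <- Rinv_1. apply Rinv_le_contravar; nra.
  - rewrite Rabs_R0. apply sumabs_nn.
Qed.

Lemma nth_code K N (g : nat -> nat) i r : (i < N)%nat -> (r < 2 * K + 2)%nat ->
  nth (S (i * (2 * K + 2) + r)) (K :: map g (seq 0 (N * (2 * K + 2)))) O = g (i * (2 * K + 2) + r)%nat.
Proof.
  intros Hi Hr. simpl.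
  rewrite nth_indep with (d' := g O) by (rewrite length_map, length_seq; nia).
  rewrite map_nth, seq_nth by nia. auto.
Qed.

Lemma divmod_code K i r : (r < 2 * K + 2)%nat ->
  ((i * (2 * K + 2) + r) / (2 * K + 2) = i /\ (i * (2 * K + 2) + r) mod (2 * K + 2) = r)%nat.
Proof.
  intros Hr. split.
  - rewrite Nat.div_add_l by lia. rewrite Nat.div_small by lia. lia.
  - rewrite Nat.add_comm, Nat.Div0.mod_add. apply Nat.mod_small; auto.
Qed.

Lemma density p N (y : nat -> zseq) eta : 1 <= p -> (forall i, (i < N)%nat -> in_lp p (y i)) -> 0 < eta ->
  exists m, / (INR (Kc m) + 1) <= eta /\ forall i, (i < N)%nat -> forall w,
    pf (fun j => abspow (Uc m i j - y i j) p) w <= eta.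
Proof.
  intros Hp Hy He.
  set (a := fun i => zfold (fun j => abspow (y i j) p)).
  assert (Ha : forall i k, 0 <= a i k) by (intros; unfold a, zfold; pose proof (AP0 (y i (Z.of_nat k)) p); pose proof (AP0 (y i (- Z.of_nat k - 1)%Z) p); lra).
  destruct (fin_ev (fun i K => forall w, (K <= w)%nat -> ps (a i) w - ps (a i) K <= eta / 2) N) as [K0 HK0].
  { intros i Hi. destruct (ps_tail (a i) (Ha i) (Hy i Hi) (eta / 2)) as [K1 HK1]. lra.
    exists K1. intros K HK w Hw. pose proof (ps_mono (a i) K1 K (Ha i) HK). specialize (HK1 w ltac:(lia)). lra. }
  destruct (archimed (4 / eta)) as [Hup _].
  set (K := (Z.to_nat (up (4 / eta)) + K0)%nat).
  assert (HK : / (INR K + 1) <= eta / 4).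
  { assert (4 / eta < INR K + 1).
    { unfold K. rewrite plus_INR, INR_IZR_INZ. pose proof (pos_INR K0).
      destruct (Z_le_gt_dec 0 (up (4 / eta))).
      - rewrite Z2Nat.id by auto. lra.
      - assert (4 / eta > 0) by (apply Rdiv_lt_0_compat; lra). assert (IZR (up (4 / eta)) < 0) by (apply IZR_lt; lia). lra. }
    assert (0 < 4 / eta) by (apply Rdiv_lt_0_compat; lra).
    replace (eta / 4) with (/ (4 / eta)) by (field; lra). apply Rinv_le_contravar; lra. }
  set (s := (INR K + 1) ^ 2).
  assert (Hs : 1 <= s). { unfold s. pose proof (pos_INR K). nra. }
  set (cval := fun i j => up (y i j * s)).
  set (g := fun idx => zenc (cval (idx / (2 * K + 2))%nat (Z.of_nat (idx mod (2 * K + 2)) - Z.of_nat K - 1)%Z)).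
  set (c := K :: map g (seq 0 (N * (2 * K + 2)))).
  exists (encl c).
  assert (EK : Kc (encl c) = K) by (unfold Kc; rewrite decode_encl; auto).
  split. { rewrite EK. lra. }
  intros i Hi w.
  assert (Hwin : forall j, inwin K j = true -> abspow (Uc (encl c) i j - y i j) p <= / s).
  { intros j Hj. unfold Uc. rewrite EK, Hj, decode_encl.
    unfold inwin in Hj. apply Bool.andb_true_iff in Hj. destruct Hj as [Hj1 Hj2].
    apply Z.leb_le in Hj1. apply Z.ltb_lt in Hj2.
    set (r := Z.to_nat (j + Z.of_nat K + 1)).
    unfold c. rewrite nth_code by (auto; unfold r; lia).
    unfold g. destruct (divmod_code K i r ltac:(unfold r; lia)) as [E1 E2]. rewrite E1, E2, zdec_zenc.
    replace (Z.of_nat r - Z.of_nat K - 1)%Z with j by (unfold r; lia).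
    unfold cval. fold s. destruct (archimed (y i j * s)) as [A1 A2].
    assert (E : IZR (up (y i j * s)) / s - y i j = (IZR (up (y i j * s)) - y i j * s) / s) by (field; lra).
    rewrite E. assert (0 < / s) by (apply Rinv_0_lt_compat; lra).
    assert (0 <= (IZR (up (y i j * s)) - y i j * s) / s <= / s).
    { unfold Rdiv. split; nra. }
    eapply Rle_trans. apply AP_le1; auto. rewrite Rabs_right by lra.
    assert (/ s <= 1) by (rewrite <- Rinv_1; apply Rinv_le_contravar; lra). lra.
    rewrite Rabs_right; lra. }
  assert (Hout : forall j, inwin K j = false -> abspow (Uc (encl c) i j - y i j) p = abspow (y i j) p).
  { intros j Hj. unfold Uc. rewrite EK, Hj. rewrite Rminus_0_l, <- AP_abs, Rabs_Ropp, AP_abs. auto. }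
  set (h := fun k => if Nat.ltb k (S K) then 2 * / s else a i k).
  assert (Hh : ps (zfold (fun j => abspow (Uc (encl c) i j - y i j) p)) w <= ps h w).
  { apply ps_le. intros k. unfold h, zfold. destruct (Nat.ltb_spec k (S K)).
    - assert (inwin K (Z.of_nat k) = true) by (unfold inwin; apply Bool.andb_true_iff; split; [apply Z.leb_le|apply Z.ltb_lt]; lia).
      assert (inwin K (- Z.of_nat k - 1) = true) by (unfold inwin; apply Bool.andb_true_iff; split; [apply Z.leb_le|apply Z.ltb_lt]; lia).
      pose proof (Hwin _ H0). pose proof (Hwin _ H1). lra.
    - assert (inwin K (Z.of_nat k) = false) by (unfold inwin; apply Bool.andb_false_iff; right; apply Z.ltb_ge; lia).
      assert (inwin K (- Z.of_nat k - 1) = false) by (unfold inwin; apply Bool.andb_false_iff; left; apply Z.leb_gt; lia).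
      rewrite (Hout _ H0), (Hout _ H1). unfold a, zfold. lra. }
  unfold pf. eapply Rle_trans; [exact Hh|].
  assert (Hhead : forall v, (v <= S K)%nat -> ps h v = INR v * (2 * / s)).
  { intros v Hv. rewrite <- ps_const. apply ps_ext_lt. intros k Hk. unfold h. destruct (Nat.ltb_spec k (S K)); auto; lia. }
  assert (H2s : INR (S K) * (2 * / s) <= eta / 2).
  { unfold s. rewrite S_INR. pose proof (pos_INR K).
    replace ((INR K + 1) * (2 * / (INR K + 1) ^ 2)) with (2 * / (INR K + 1)) by (field; lra). lra. }
  assert (0 <= / s) by (left; apply Rinv_0_lt_compat; lra).
  destruct (le_lt_dec w (S K)) as [Hw|Hw].
  - rewrite Hhead by auto. assert (INR w <= INR (S K)) by (apply le_INR; auto). nra.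
  - replace w with (S K + (w - S K))%nat by lia. rewrite ps_add_range, Hhead by lia.
    rewrite (ps_ext_lt _ (fun r => a i (S K + r)%nat)).
    2: { intros r Hr. unfold h. destruct (Nat.ltb_spec (S K + r) (S K)); auto; lia. }
    pose proof (ps_add_range (a i) (S K) (w - S K)).
    specialize (HK0 (S K) ltac:(unfold K; lia) i Hi (S K + (w - S K))%nat ltac:(lia)). lra.
Qed.

Lemma pf_point g j : (forall j, 0 <= g j) -> g j <= pf g (S (Z.to_nat (Z.abs j))).
Proof.
  intros H. unfold pf.
  assert (Hz : forall k, 0 <= zfold g k) by (intros; unfold zfold; pose proof (H (Z.of_nat k)); pose proof (H (- Z.of_nat k - 1)%Z); lra).
  destruct (Z_le_gt_dec 0 j).
  - eapply Rle_trans; [|apply (ps_ge_term _ _ (Z.to_nat j) Hz); lia].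
    unfold zfold. rewrite Z2Nat.id by auto. pose proof (H (- j - 1)%Z). lra.
  - eapply Rle_trans; [|apply (ps_ge_term _ _ (Z.to_nat (- j - 1)) Hz); lia].
    unfold zfold. rewrite Z2Nat.id by lia. replace (- (- j - 1) - 1)%Z with j by lia. pose proof (H (- j - 1)%Z). lra.
Qed.

Lemma dh_T p N (q l : nat -> Z) (lam : nat -> R) : 1 <= p -> (2 <= N)%nat ->
  (forall i, (i < N)%nat -> (0 < q i)%Z) ->
  (forall s t, (s < t)%nat -> (t < N)%nat -> (2 * q s < q t)%Z) ->
  (forall s t, (s < t)%nat -> (t < N)%nat -> 1 < Rabs (lam s) /\ Rabs (lam s) < Rabs (lam t)) ->
  disjoint_hypercyclic p N (fun i => T_op (q i) (lam i) (l i)).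
Proof.
  intros Hp HN Hq Hqq HL.
  destruct (construct N q l lam HN Hq Hqq HL Kc Uc Bc Uc0 UcB p Hp) as [x [Hx Hst]].
  exists x. split; auto. intros y Hy eps Heps.
  assert (H2p : 0 < Rpower 2 p) by apply Rpower_pos.
  assert (Hep : 0 < Rpower eps p) by apply Rpower_pos.
  set (eta := Rmin (1/3) (Rpower eps p / (8 * Rpower 2 p))).
  assert (Heta : 0 < eta) by (unfold eta; apply Rmin_pos; [lra| apply Rdiv_lt_0_compat; lra]).
  destruct (density p N y eta Hp Hy Heta) as [m [HK Happ]].
  destruct (Hst m) as [n Hn]. exists n. intros i Hi.
  set (E := fun j => Nat.iter n (T_op (q i) (lam i) (l i)) x j - Uc m i j).
  assert (HE : forall w, pf (fun j => Rabs (E j)) w <= 3 * eta).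
  { intros w. eapply Rle_trans; [apply Hn; auto|]. lra. }
  assert (HE1 : forall j, Rabs (E j) <= 1).
  { intros j. eapply Rle_trans. apply (pf_point (fun j => Rabs (E j))). intros; apply Rabs_pos.
    eapply Rle_trans; [apply HE|]. pose proof (Rmin_l (1/3) (Rpower eps p / (8 * Rpower 2 p))). fold eta in H. lra. }
  set (B := Rpower 2 p * (4 * eta)).
  assert (Hpf : forall w, pf (fun j => abspow (zsub (Nat.iter n (T_op (q i) (lam i) (l i)) x) (y i) j) p) w <= B).
  { intros w. eapply Rle_trans.
    { apply pf_le with (h := fun j => Rpower 2 p * (Rabs (E j) + abspow (Uc m i j - y i j) p)).
      intros j. unfold zsub. replace (Nat.iter n (T_op (q i) (lam i) (l i)) x j - y i j) with (E j + (Uc m i j - y i j)) by (unfold E; ring).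
      eapply Rle_trans. apply AP_sum2. lra. apply Rmult_le_compat_l. lra.
      pose proof (AP_le1 (E j) p Hp (HE1 j)). lra. }
    rewrite pf_scal, pf_plus. unfold B. apply Rmult_le_compat_l. lra.
    pose proof (HE w). pose proof (Happ i Hi w). lra. }
  destruct (pf_BND _ B (fun j => AP0 _ p) Hpf) as [Hex HS].
  unfold lp_norm. apply AP_root_lt; auto. lra.
  apply Series_nonneg; auto. intros; apply AP0.
  eapply Rle_lt_trans; [exact HS|]. unfold B.
  pose proof (Rmin_r (1/3) (Rpower eps p / (8 * Rpower 2 p))). fold eta in H.
  apply Rmult_le_compat_l with (r := 4 * Rpower 2 p) in H; [|lra].
  replace (4 * Rpower 2 p * (Rpower eps p / (8 * Rpower 2 p))) with (Rpower eps p / 2) in H by (field; lra).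
  lra.
Qed.

Lemma dh_S p N (q l : nat -> Z) (lam : nat -> R) : 1 <= p -> (2 <= N)%nat ->
  (forall i, (i < N)%nat -> (0 < q i)%Z) ->
  (forall s t, (s < t)%nat -> (t < N)%nat -> (2 * q s < q t)%Z) ->
  (forall s t, (s < t)%nat -> (t < N)%nat -> 1 < Rabs (lam s) /\ Rabs (lam s) < Rabs (lam t)) ->
  disjoint_hypercyclic p N (fun i => S_op (q i) (lam i) (l i)).
Proof.
  intros Hp HN Hq Hqq HL.
  destruct (dh_T p N q (fun i => q i - 2 - l i)%Z lam Hp HN Hq Hqq HL) as [x [Hx Hd]].
  exists (refl x). split. apply in_lp_refl; auto.
  intros y Hy eps Heps.
  destruct (Hd (fun i => refl (y i))) with eps as [n Hn]; auto.
  { intros i Hi. apply in_lp_refl; auto. }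
  exists n. intros i Hi. specialize (Hn i Hi).
  rewrite iter_S_op, refl_refl.
  assert (E : zsub (refl (Nat.iter n (T_op (q i) (lam i) (q i - 2 - l i)) x)) (y i)
            = refl (zsub (Nat.iter n (T_op (q i) (lam i) (q i - 2 - l i)) x) (refl (y i)))).
  { apply functional_extensionality; intros j. unfold zsub, refl. f_equal. f_equal. lia. }
  rewrite E, lp_norm_refl. auto.
Qed.

Lemma lam_nz_main N (lam : nat -> R) : (2 <= N)%nat ->
  (forall s t, (s < t)%nat -> (t < N)%nat -> 1 < Rabs (lam s) /\ Rabs (lam s) < Rabs (lam t)) ->
  forall i, (i < N)%nat -> lam i <> 0.
Proof.
  intros HN HL i Hi E.
  assert (1 < Rabs (lam i)).
  { destruct (Nat.eq_dec i (N - 1)).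
    - destruct (HL 0 (N-1))%nat as [H1 H2]; try lia. subst; lra.
    - destruct (HL i (N-1))%nat; try lia; auto. }
  rewrite E, Rabs_R0 in H. lra.
Qed.

(* indices 1..N of the paper are 0..N-1 here *)
Theorem theorem2p5 (p : R) (N : nat) (q : nat -> Z) (l : nat -> Z)
  (lam : nat -> R) :
  1 <= p -> (2 <= N)%nat ->
  (forall i, (i < N)%nat -> (0 < q i)%Z) ->
  (forall s t, (s < t)%nat -> (t < N)%nat -> (2 * q s < q t)%Z) ->
  (forall s t, (s < t)%nat -> (t < N)%nat ->
     1 < Rabs (lam s) /\ Rabs (lam s) < Rabs (lam t)) ->
  let T := fun i => pseudo_shift (shift_map (q i)) (step_weight (lam i) (l i)) in
  exists S : nat -> zseq -> zseq,
    (forall i, (i < N)%nat -> inverse_op p (T i) (S i)) /\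
    disjoint_hypercyclic p N T /\
    disjoint_hypercyclic p N S.
Proof.
  intros Hp HN Hq Hqq HL T.
  exists (fun i => S_op (q i) (lam i) (l i)).
  split; [|split].
  - intros i Hi. apply inverse_TS; auto. apply (lam_nz_main N lam HN HL i Hi).
  - exact (dh_T p N q l lam Hp HN Hq Hqq HL).
  - exact (dh_S p N q l lam Hp HN Hq Hqq HL).
Qed.
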